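(* Let $K\in\mathbb{N}^*$. For every $p\in\mathbb{N}^*$ there exist $C>0$ and a quadratic form $Q_p$ such that for every real-valued $\mu\in C_c^\infty(0,1)$, $$A^p_K(\mu)=\langle(\mu^{(2p-1)})^2\varphi_1,\varphi_K\rangle+Q_p(\mu),\qquad |Q_p(\mu)|\le C\|\mu\|^2_{H^{2p-2}(0,1)}.$$
   Context: $\varphi_j=\sqrt2\sin(j\pi x)$, $\lambda_j=(j\pi)^2$, $\langle f,g\rangle=\int_0^1f\bar g$, $c_j=\langle\mu\varphi_1,\varphi_j\rangle\langle\mu\varphi_K,\varphi_j\rangle$, and $A^p_K(\mu)=(-1)^{p-1}\sum_{j\ge1}(\lambda_j-\frac{\lambda_1+\lambda_K}2)(\lambda_K-\lambda_j)^{p-1}(\lambda_j-\lambda_1)^{p-1}c_j$, viewed as a quadratic form in $\mu$. $H^0=L^2$. *)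

(* Defs.v *)
From Stdlib Require Import Reals.
From Coquelicot Require Import Coquelicot.
Open Scope R_scope.

Definition phi (j : nat) (x : R) : R := sqrt 2 * sin (INR j * PI * x).
Definition lam (j : nat) : R := (INR j * PI) ^ 2.

Definition ip (f g : R -> R) : R := RInt (fun x => f x * g x) 0 1.

(* real-valued C_c^infty(0,1) functions (extended by 0 to R) *)
Definition test_fun (mu : R -> R) : Prop :=
  (forall (n : nat) (x : R), ex_derive_n mu n x) /\
  exists a b : R, 0 < a /\ a < b /\ b < 1 /\
    forall x, (x < a \/ b < x) -> mu x = 0.

Definition c_coef (K : nat) (mu : R -> R) (j : nat) : R :=
  ip (fun x => mu x * phi 1 x) (phi j) * ip (fun x => mu x * phi K x) (phi j).

(* j-th term of the series defining A^p_K(mu) (meaningful for j >= 1) *)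
Definition A_term (K p : nat) (mu : R -> R) (j : nat) : R :=
  (-1) ^ (p - 1) *
  ((lam j - (lam 1 + lam K) / 2) * (lam K - lam j) ^ (p - 1)
     * (lam j - lam 1) ^ (p - 1) * c_coef K mu j).

Definition A_series (K p : nat) (mu : R -> R) (n : nat) : R := A_term K p mu (S n).
Definition A_Kp (K p : nat) (mu : R -> R) : R := Series (A_series K p mu).

Definition Hnorm2 (m : nat) (mu : R -> R) : R :=
  sum_f_R0 (fun k => RInt (fun x => (Derive_n mu k x) ^ 2) 0 1) m.

Definition bilinear_on (P : (R -> R) -> Prop) (B : (R -> R) -> (R -> R) -> R) : Prop :=
  forall (a : R) (f g h : R -> R), P f -> P g -> P h ->
    B (fun x => a * f x + g x) h = a * B f h + B g h /\
    B h (fun x => a * f x + g x) = a * B h f + B h g.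

Definition quadratic_form_on (P : (R -> R) -> Prop) (Q : (R -> R) -> R) : Prop :=
  exists B, bilinear_on P B /\ forall f, P f -> Q f = B f f.

(* Main.v *)
Require Import Defs.
From Stdlib Require Import Reals Lra Lia.
From Coquelicot Require Import Coquelicot.
Open Scope R_scope.

Fixpoint fsum (f : nat -> R) (n : nat) : R :=
  match n with O => 0 | S k => fsum f k + f k end.

Lemma fsum_ext f g n : (forall i, (i < n)%nat -> f i = g i) -> fsum f n = fsum g n.
Proof. induction n; simpl; intros H; auto. rewrite IHn by (intros; apply H; lia). rewrite H by lia. auto. Qed.

Lemma fsum_plus f g n : fsum (fun i => f i + g i) n = fsum f n + fsum g n.
Proof. induction n; simpl; [lra|]. rewrite IHn; lra. Qed.

Lemma fsum_scal c f n : fsum (fun i => c * f i) n = c * fsum f n.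
Proof. induction n; simpl; [lra|]. rewrite IHn; lra. Qed.

Lemma fsum_shift f n : fsum f (S n) = f O + fsum (fun i => f (S i)) n.
Proof. induction n; simpl in *; [lra|]. rewrite IHn; lra. Qed.

Lemma fsum_swap (f : nat -> nat -> R) n m :
  fsum (fun i => fsum (fun j => f i j) m) n = fsum (fun j => fsum (fun i => f i j) n) m.
Proof. induction n; simpl.
- induction m; simpl; auto; rewrite <- IHm; lra.
- rewrite IHn. rewrite <- fsum_plus. auto. Qed.

Lemma fsum_abs f n : Rabs (fsum f n) <= fsum (fun i => Rabs (f i)) n.
Proof. induction n; simpl. rewrite Rabs_R0; lra.
  eapply Rle_trans. apply Rabs_triang. lra. Qed.

Lemma fsum_le f g n : (forall i, (i < n)%nat -> f i <= g i) -> fsum f n <= fsum g n.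
Proof. induction n; simpl; intros H; [lra|].
  assert (fsum f n <= fsum g n) by (apply IHn; intros; apply H; lia).
  assert (f n <= g n) by (apply H; lia). lra. Qed.

Lemma fsum_nonneg f n : (forall i, (i < n)%nat -> 0 <= f i) -> 0 <= fsum f n.
Proof. intros H. replace 0 with (fsum (fun _ => 0) n). apply fsum_le; auto.
  induction n; simpl; auto. rewrite IHn; [lra|]. intros; apply H; lia. Qed.

Fixpoint Ck (n : nat) (f : R -> R) : Prop :=
  match n with
  | O => forall x, continuous f x
  | S k => (forall x, ex_derive f x) /\ Ck k (Derive f)
  end.

Definition Smooth f := forall n, Ck n f.

Lemma Ck_ext n : forall f g, (forall x, f x = g x) -> Ck n f -> Ck n g.
Proof. induction n; simpl; intros f g H Hf.
- intros x. eapply continuous_ext. apply H. apply Hf.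
- destruct Hf as [H1 H2]. split.
  + intros x. eapply ex_derive_ext. apply H. apply H1.
  + eapply IHn; [|apply H2]. intros x. apply Derive_ext. auto. Qed.

Lemma Ck_weaken n : forall f, Ck (S n) f -> Ck n f.
Proof. induction n; simpl; intros f [H1 H2].
- intros x. apply (ex_derive_continuous (K:=R_AbsRing) (V:=R_NormedModule)). apply H1.
- split; auto. Qed.

Lemma Ck_plus n : forall f g, Ck n f -> Ck n g -> Ck n (fun x => f x + g x).
Proof. induction n; simpl; intros f g Hf Hg.
- intros x. apply (continuous_plus f g); auto.
- destruct Hf as [F1 F2], Hg as [G1 G2]. split.
  + intros x. apply (ex_derive_plus f g); auto.
  + eapply Ck_ext. 2: apply (IHn _ _ F2 G2). intros x. simpl. rewrite Derive_plus; auto. Qed.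

Lemma Ck_scal n : forall c f, Ck n f -> Ck n (fun x => c * f x).
Proof. induction n; simpl; intros c f Hf.
- intros x. apply (continuous_mult (fun _ => c) f); auto. apply continuous_const.
- destruct Hf as [F1 F2]. split.
  + intros x. apply ex_derive_scal; auto.
  + eapply Ck_ext. 2: apply (IHn c _ F2). intros x. simpl. rewrite Derive_scal; auto. Qed.

Lemma Ck_mult n : forall f g, Ck n f -> Ck n g -> Ck n (fun x => f x * g x).
Proof. induction n; simpl; intros f g Hf Hg.
- intros x. apply (continuous_mult f g); auto.
- pose proof (Ck_weaken n f Hf) as Wf. pose proof (Ck_weaken n g Hg) as Wg.
  destruct Hf as [F1 F2], Hg as [G1 G2]. split.
  + intros x. apply ex_derive_mult; auto.
  + eapply Ck_ext. 2: apply Ck_plus; [apply (IHn _ _ F2 Wg)|apply (IHn _ _ Wf G2)].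
    intros x. simpl. rewrite Derive_mult; auto. Qed.

Lemma Smooth_plus f g : Smooth f -> Smooth g -> Smooth (fun x => f x + g x).
Proof. intros Hf Hg n. apply Ck_plus; auto. Qed.
Lemma Smooth_scal c f : Smooth f -> Smooth (fun x => c * f x).
Proof. intros Hf n. apply Ck_scal; auto. Qed.
Lemma Smooth_mult f g : Smooth f -> Smooth g -> Smooth (fun x => f x * g x).
Proof. intros Hf Hg n. apply Ck_mult; auto. Qed.
Lemma Smooth_ext f g : (forall x, f x = g x) -> Smooth f -> Smooth g.
Proof. intros H Hf n. eapply Ck_ext; eauto. Qed.
Lemma Smooth_Derive f : Smooth f -> Smooth (Derive f).
Proof. intros Hf n. apply (Hf (S n)). Qed.
Lemma Smooth_ex_derive f : Smooth f -> forall x, ex_derive f x.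
Proof. intros Hf. apply (Hf 1%nat). Qed.
Lemma Smooth_is_derive f : Smooth f -> forall x, is_derive f x (Derive f x).
Proof. intros Hf x. apply Derive_correct. apply Smooth_ex_derive; auto. Qed.
Lemma Smooth_cont f : Smooth f -> forall x, continuous f x.
Proof. intros Hf. apply (Hf O). Qed.
Lemma Smooth_const c : Smooth (fun _ => c).
Proof. intros n. revert c. induction n; simpl; intros c.
- intros; apply continuous_const.
- split. intros; apply ex_derive_const. eapply Ck_ext. 2: apply (IHn 0). intros; simpl. rewrite Derive_const; auto. Qed.

Lemma Smooth_sin a c b : Smooth (fun x => a * sin (c * x + b)).
Proof. intros n. revert a b. induction n; intros a b; simpl.
- intros x. apply (continuous_comp (fun x => c * x + b) (fun y => a * sin y)).
  + apply continuity_pt_filterlim. apply continuity_pt_plus. apply continuity_pt_scal. apply continuity_pt_id. apply continuity_pt_const. intros u v; auto.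
  + apply continuity_pt_filterlim. apply continuity_pt_scal. apply continuity_sin.
- split.
  + intros x. auto_derive. auto.
  + eapply Ck_ext. 2: apply (IHn (a * c) (b + PI/2)). intros x. simpl.
    apply sym_eq. apply is_derive_unique. auto_derive. auto.
    replace (c * x + (b + PI/2)) with ((c*x+b) + PI/2) by ring. rewrite sin_plus, sin_PI2, cos_PI2. ring.
Qed.

Lemma is_derive_cont_pt f x l : is_derive f x l -> continuity_pt f x.
Proof. intros H. apply is_derive_Reals in H.
  apply (derivable_continuous_pt f x (exist _ l H)). Qed.

Lemma mvt_bound f df x y C :
  (forall s, Rmin x y <= s <= Rmax x y -> is_derive f s (df s)) ->
  (forall s, Rmin x y <= s <= Rmax x y -> Rabs (df s) <= C) ->
  Rabs (f y - f x) <= C * Rabs (y - x).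
Proof. intros Hd Hb.
  destruct (MVT_gen f x y df) as [c [Hc Hf]].
  - intros; apply Hd; lra.
  - intros; eapply is_derive_cont_pt; apply Hd; lra.
  - rewrite Hf, Rabs_mult. apply Rmult_le_compat_r. apply Rabs_pos. apply Hb; auto. Qed.

Lemma is_derive_plus' f g x a b c : is_derive f x a -> is_derive g x b -> c = a + b ->
  is_derive (fun t => f t + g t) x c.
Proof. intros Hf Hg ->. apply (is_derive_plus f g x a b Hf Hg). Qed.

Definition cN N t := fsum (fun j => cos (INR (S j) * t) / (INR (S j))^2) N.
Definition sN N t := fsum (fun j => sin (INR (S j) * t) / INR (S j)) N.
Definition kN N t := fsum (fun j => cos (INR (S j) * t)) N.
Definition Pth t := PI^2/6 - PI*t/2 + t^2/4.
Definition eN N t := cN N t - Pth t.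
Definition ed N t := - sN N t + PI/2 - t/2.

Lemma INRS_pos j : 0 < INR (S j).
Proof. apply lt_0_INR; lia. Qed.

Lemma d_cN N (t:R) : is_derive (cN N) t (- sN N t).
Proof. revert t; induction N; intros t.
- unfold cN, sN; simpl. replace (-0) with 0 by ring. apply (is_derive_const (K:=R_AbsRing) (V:=R_NormedModule)).
- unfold cN, sN; cbn [fsum]. apply is_derive_plus' with (a := - sN N t) (b := - (sin (INR (S N) * t) / INR (S N))). apply IHN.
  + pose proof (INRS_pos N). remember (INR (S N)) as n. auto_derive. auto. field. lra.
  + unfold sN. ring.
Qed.

Lemma d_sN N (t:R) : is_derive (sN N) t (kN N t).
Proof. revert t; induction N; intros t.
- unfold kN, sN; simpl. apply (is_derive_const (K:=R_AbsRing) (V:=R_NormedModule)).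
- unfold kN, sN; cbn [fsum]. apply is_derive_plus' with (a := kN N t) (b := cos (INR (S N) * t)). apply IHN.
  + pose proof (INRS_pos N). remember (INR (S N)) as n. auto_derive. auto. field. lra.
  + unfold kN. ring.
Qed.

Lemma is_derive_minus' f g x a b c : is_derive f x a -> is_derive g x b -> c = a - b ->
  is_derive (fun t => f t - g t) x c.
Proof. intros Hf Hg ->. apply (is_derive_minus f g x a b Hf Hg). Qed.

Lemma d_eN N (t:R) : is_derive (eN N) t (ed N t).
Proof. unfold eN, ed.
  apply is_derive_minus' with (a := - sN N t) (b := - PI/2 + t/2). apply d_cN. unfold Pth. auto_derive. auto. field. lra. Qed.

Lemma d_ed N (t:R) : is_derive (ed N) t (- kN N t - 1/2).
Proof. unfold ed.
  apply is_derive_minus' with (a := - kN N t) (b := 1/2).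
  apply is_derive_plus' with (a := - kN N t) (b := 0).
  apply (is_derive_opp (sN N) t (kN N t)). apply d_sN. auto_derive. auto. ring. ring.
  auto_derive. auto. field. ring. Qed.

Lemma dirichlet N t : 2 * sin (t/2) * (1/2 + kN N t) = sin ((INR N + 1/2) * t).
Proof. induction N.
- unfold kN; cbn [fsum INR]. replace ((0 + 1/2) * t) with (t/2) by field. field.
- unfold kN in *. cbn [fsum].
  replace (2 * sin (t / 2) * (1 / 2 + (fsum (fun j : nat => cos (INR (S j) * t)) N + cos (INR (S N) * t))))
   with (2 * sin (t / 2) * (1 / 2 + fsum (fun j : nat => cos (INR (S j) * t)) N) + 2 * sin (t/2) * cos (INR (S N) * t)) by ring.
  rewrite IHN. rewrite S_INR.
  replace ((INR N + 1/2) * t) with ((INR N + 1) * t - t/2) by field.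
  replace ((INR N + 1 + 1/2) * t) with ((INR N + 1) * t + t/2) by field.
  rewrite sin_minus, sin_plus. ring.
Qed.

Lemma sin_INR_PI j : sin (INR j * PI) = 0.
Proof. apply sin_eq_0_1. exists (Z.of_nat j). rewrite INR_IZR_INZ. auto. Qed.

Lemma fsum_zero f n : (forall i, (i < n)%nat -> f i = 0) -> fsum f n = 0.
Proof. induction n; simpl; intros H; auto. rewrite IHn, H by (auto; lia). ring. Qed.

Lemma ed_PI N : ed N PI = 0.
Proof. unfold ed, sN. rewrite fsum_zero. field.
  intros. rewrite sin_INR_PI. field. pose proof (INRS_pos i); lra. Qed.

Lemma sin_half_cont c : continuity_pt (fun s => sin (s/2)) c.
Proof. apply (is_derive_cont_pt _ _ (cos (c/2) * /2)). auto_derive. auto. unfold Rdiv. ring. Qed.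

Lemma gen_bound x y M m : -1 <= x <= 1 -> 0 < m -> m <= y -> 0 < M ->
  Rabs (x * / (2 * y) / M) <= / (2*m) / M.
Proof. intros Hx Hm Hy HM.
  assert (0 < /M) by (apply Rinv_0_lt_compat; lra).
  assert (0 < /(2*y)) by (apply Rinv_0_lt_compat; lra).
  assert (/(2*y) <= /(2*m)) by (apply Rinv_le_contravar; lra).
  unfold Rdiv. rewrite !Rabs_mult, (Rabs_right (/M)), (Rabs_right (/(2*y))) by lra.
  assert (Rabs x <= 1) by (apply Rabs_le; lra). pose proof (Rabs_pos x).
  apply Rmult_le_compat_r. lra. nra. Qed.

Lemma gen_bound2 x y z M m : -1 <= x <= 1 -> -1 <= y <= 1 -> 0 < m -> m <= z -> 0 < M ->
  Rabs (- (x * (- y * / (4 * z ^ 2))) / M) <= / (4*m^2) / M.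
Proof. intros Hx Hy Hm Hz HM.
  assert (0 < /M) by (apply Rinv_0_lt_compat; lra).
  assert (0 < /(4*z^2)) by (apply Rinv_0_lt_compat; nra).
  assert (/(4*z^2) <= /(4*m^2)) by (apply Rinv_le_contravar; nra).
  unfold Rdiv. rewrite Rabs_mult, Rabs_Ropp, !Rabs_mult, Rabs_Ropp, (Rabs_right (/M)), (Rabs_right (/(4*z^2))) by lra.
  assert (Rabs x <= 1) by (apply Rabs_le; lra). pose proof (Rabs_pos x).
  assert (Rabs y <= 1) by (apply Rabs_le; lra). pose proof (Rabs_pos y).
  apply Rmult_le_compat_r. lra.
  assert (Rabs y * / (4 * z^2) <= / (4*m^2)) by nra. nra. Qed.

Lemma K1 th : 0 < th < 2*PI -> exists C, forall N, Rabs (eN N th - eN N PI) <= C / (INR N + 1/2).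
Proof. intros Hth. pose proof PI_RGT_0 as HPI.
  set (a := Rmin th PI). set (b := Rmax th PI).
  assert (Ha : 0 < a) by (unfold a, Rmin; destruct Rle_dec; lra).
  assert (Hb : b < 2*PI) by (unfold b, Rmax; destruct Rle_dec; lra).
  assert (Hab : a <= b) by (unfold a, b, Rmin, Rmax; destruct Rle_dec; lra).
  assert (HPa : a <= PI <= b) by (unfold a, b, Rmin, Rmax; destruct Rle_dec; lra).
  assert (Hta : a <= th <= b) by (unfold a, b, Rmin, Rmax; destruct Rle_dec; lra).
  destruct (continuity_ab_min (fun s => sin (s/2)) a b Hab) as [mx [Hmin Hmx]].
  { intros; apply sin_half_cont. }
  set (m := sin (mx/2)).
  assert (Hm : 0 < m) by (apply sin_gt_0; lra).
  assert (Hs : forall s, a <= s <= b -> m <= sin (s/2)) by (intros; apply Hmin; auto).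
  set (U0 := / (2*m)). set (U1 := / (4 * m^2)).
  assert (HU0 : 0 < U0) by (unfold U0; apply Rinv_0_lt_compat; lra).
  assert (HU1 : 0 < U1) by (unfold U1; apply Rinv_0_lt_compat; nra).
  set (K := 2*U0 + 2*PI*U1).
  assert (Hg : forall M s, 0 < M -> a <= s <= b -> Rabs (cos (M*s) * / (2 * sin (s/2)) / M) <= U0 / M).
  { intros M s HM Hs'. pose proof (Hs s Hs'). apply gen_bound; auto; apply COS_bound. }
  assert (Hed : forall N s, a <= s <= b -> Rabs (ed N s) <= K / (INR N + 1/2)).
  { intros N s Hs'. set (M := INR N + 1/2).
    assert (HM : 0 < M) by (unfold M; pose proof (pos_INR N); lra).
    set (H := fun s => ed N s - cos (M*s) * / (2 * sin (s/2)) / M).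
    set (dH := fun s => - (cos (M*s) * (- cos (s/2) * / (4 * sin (s/2) ^ 2))) / M).
    assert (HdH : forall s, a <= s <= b -> is_derive H s (dH s)).
    { intros r Hr. pose proof (Hs r Hr) as Hr'. unfold H, dH.
      apply is_derive_minus' with (a := - kN N r - 1/2)
         (b := - sin (M*r) * / (2 * sin (r/2)) + cos (M*r) * (- cos (r/2) * / (4 * sin (r/2) ^ 2)) / M).
      apply d_ed. auto_derive. lra. change (r * / 2) with (r / 2). field. lra.
      pose proof (dirichlet N r) as Hd. fold M in Hd.
      assert (Hk : - kN N r - 1/2 = - sin (M*r) * / (2 * sin (r/2))).
      { rewrite <- Hd. field. lra. }
      rewrite Hk. field. lra. }
    assert (HdHb : forall s, a <= s <= b -> Rabs (dH s) <= U1 / M).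
    { intros r Hr. pose proof (Hs r Hr) as Hr'. unfold dH. apply gen_bound2; auto; apply COS_bound. }
    assert (HHs : Rabs (H s - H PI) <= U1 / M * Rabs (s - PI)).
    { apply mvt_bound with (df := dH).
      - intros r Hr. apply HdH. unfold Rmin, Rmax in Hr; destruct Rle_dec; lra.
      - intros r Hr. apply HdHb. unfold Rmin, Rmax in Hr; destruct Rle_dec; lra. }
    assert (HHPI : Rabs (H PI) <= U0 / M).
    { unfold H. rewrite ed_PI. rewrite Rminus_0_l, Rabs_Ropp. apply Hg; auto. }
    assert (Hsp : Rabs (s - PI) <= 2*PI) by (apply Rabs_le; lra).
    assert (Hgs := Hg M s HM Hs').
    replace (ed N s) with ((H s - H PI) + H PI + cos (M*s) * / (2 * sin (s/2)) / M) by (unfold H; ring).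
    eapply Rle_trans. apply Rabs_triang. eapply Rle_trans. apply Rplus_le_compat_r. apply Rabs_triang.
    assert (U1 / M * Rabs (s - PI) <= U1 / M * (2*PI)).
    { apply Rmult_le_compat_l; auto. left. unfold Rdiv; apply Rmult_lt_0_compat; auto. apply Rinv_0_lt_compat; lra. }
    unfold K. unfold Rdiv in *. nra. }
  exists (2*PI*K). intros N.
  assert (HM : 0 < INR N + 1/2) by (pose proof (pos_INR N); lra).
  assert (Hm2 := mvt_bound (eN N) (ed N) PI th (K / (INR N + 1/2))).
  eapply Rle_trans. apply Hm2.
  - intros; apply d_eN.
  - intros r Hr. apply Hed. unfold Rmin, Rmax in Hr; destruct Rle_dec; lra.
  - assert (Rabs (th - PI) <= 2*PI) by (apply Rabs_le; lra).
    assert (0 <= K / (INR N + 1/2)). { unfold K, Rdiv. apply Rmult_le_pos. nra. left; apply Rinv_0_lt_compat; lra. }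
    unfold Rdiv in *. nra.
Qed.

Lemma cN_double N t : cN (2*N) t + cN (2*N) (t + PI) = cN N (2*t) / 2.
Proof. induction N.
- unfold cN; simpl. field.
- replace (2 * S N)%nat with (S (S (2*N))) by lia. unfold cN in *. cbn [fsum].
  replace (INR (S (S (2*N)))) with (2*INR N + 2) by (rewrite !S_INR, mult_INR; simpl; ring).
  replace (INR (S (2*N))) with (2*INR N + 1) by (rewrite !S_INR, mult_INR; simpl; ring).
  replace (INR (S N)) with (INR N + 1) by (rewrite S_INR; ring).
  replace ((2 * INR N + 1) * (t + PI)) with (((2*INR N + 1) * t + 2 * INR N * PI) + PI) by ring.
  rewrite neg_cos, cos_period.
  replace ((2 * INR N + 2) * (t + PI)) with ((2*INR N + 2) * t + 2 * INR (S N) * PI) by (rewrite S_INR; ring).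
  rewrite cos_period.
  replace ((INR N + 1) * (2*t)) with ((2*INR N + 2) * t) by ring.
  assert (0 < 2 * INR N + 1) by (pose proof (pos_INR N); lra).
  rewrite Rdiv_plus_distr, <- IHN.
  match goal with |- ?A + ?B + ?C + (?E + ?F + ?G) = _ =>
    replace (A + B + C + (E + F + G)) with ((A + E) + B + C + F + G) by ring end.
  field. lra.
Qed.

Lemma eN_double N t : eN (2*N) t + eN (2*N) (t + PI) = eN N (2*t) / 2.
Proof. unfold eN. 
  replace (cN (2 * N) t - Pth t + (cN (2 * N) (t + PI) - Pth (t + PI))) with
    ((cN (2 * N) t + cN (2 * N) (t + PI)) - (Pth t + Pth (t + PI))) by ring.
  rewrite cN_double. unfold Pth. field. Qed.

Definition T N := fsum (fun j => / INR (S j) ^ 2) N.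

Lemma T_tail N k : T (N + k) - T N <= 2 / (INR N + 1) - 2 / (INR (N + k) + 1).
Proof. induction k.
- rewrite Nat.add_0_r. lra.
- replace (N + S k)%nat with (S (N + k)) by lia. unfold T in *. cbn [fsum].
  assert (H : / INR (S (N + k)) ^ 2 <= 2 / (INR (N + k) + 1) - 2 / (INR (S (N + k)) + 1)).
  { rewrite S_INR. pose proof (pos_INR (N + k)). set (x := INR (N+k)).
    assert (0 <= x) by (unfold x; apply pos_INR). assert (0 < x + 1) by lra.
    replace (2 / (x + 1) - 2 / (x + 1 + 1)) with (2 / ((x+1)*(x+2))) by (field; repeat split; nra).
    replace (/ (x+1)^2) with (1 / ((x+1)*(x+1))) by (field; lra).
    assert (2 / ((x+1)*(x+2)) - 1 / ((x+1)*(x+1)) = x * / ((x+1)*(x+1)*(x+2))) by (field; repeat split; nra).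
    assert (0 <= x * / ((x+1)*(x+1)*(x+2))). { apply Rmult_le_pos. lra. left; apply Rinv_0_lt_compat. nra. }
    lra. }
  lra.
Qed.

Lemma cN_cauchy N k t : Rabs (cN (N + k) t - cN N t) <= T (N + k) - T N.
Proof. induction k.
- rewrite Nat.add_0_r. unfold Rminus. rewrite Rplus_opp_r, Rabs_R0. lra.
- replace (N + S k)%nat with (S (N + k)) by lia. unfold cN, T in *. cbn [fsum].
  replace (fsum (fun j : nat => cos (INR (S j) * t) / INR (S j) ^ 2) (N + k) +
   cos (INR (S (N + k)) * t) / INR (S (N + k)) ^ 2 -
   fsum (fun j : nat => cos (INR (S j) * t) / INR (S j) ^ 2) N) with
   ((fsum (fun j : nat => cos (INR (S j) * t) / INR (S j) ^ 2) (N + k) -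
   fsum (fun j : nat => cos (INR (S j) * t) / INR (S j) ^ 2) N) + 
   cos (INR (S (N + k)) * t) / INR (S (N + k)) ^ 2) by ring.
  eapply Rle_trans. apply Rabs_triang.
  assert (Rabs (cos (INR (S (N + k)) * t) / INR (S (N + k)) ^ 2) <= / INR (S (N + k)) ^ 2).
  { pose proof (INRS_pos (N+k)). unfold Rdiv. rewrite Rabs_mult.
    rewrite (Rabs_right (/ _)) by (left; apply Rinv_0_lt_compat; nra).
    pose proof (COS_bound (INR (S (N + k)) * t)). assert (Rabs (cos (INR (S (N + k)) * t)) <= 1) by (apply Rabs_le; lra).
    assert (0 < / INR (S (N + k)) ^ 2) by (apply Rinv_0_lt_compat; nra). nra. }
  lra.
Qed.

Lemma eN_cauchy N M t : (N <= M)%nat -> Rabs (eN M t - eN N t) <= 2 / (INR N + 1).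
Proof. intros H. destruct (Nat.le_exists_sub N M H) as [k [-> _]].
  rewrite Nat.add_comm. unfold eN.
  replace (cN (N + k) t - Pth t - (cN N t - Pth t)) with (cN (N + k) t - cN N t) by ring.
  eapply Rle_trans. apply cN_cauchy. pose proof (T_tail N k).
  assert (0 <= 2 / (INR (N + k) + 1)). { pose proof (pos_INR (N+k)). unfold Rdiv. apply Rmult_le_pos. lra. left; apply Rinv_0_lt_compat; lra. }
  lra. Qed.

Lemma div_mono c a b : 0 <= c -> 0 < a <= b -> c / b <= c / a.
Proof. intros Hc Hab. unfold Rdiv. apply Rmult_le_compat_l; auto. apply Rinv_le_contravar; lra. Qed.

Lemma C_nonneg (C : R) (f : nat -> R) : (forall N, Rabs (f N) <= C / (INR N + 1/2)) -> 0 <= C.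
Proof. intros H. specialize (H O). simpl in H. pose proof (Rabs_pos (f O)).
  assert (0 <= C / (0 + 1/2)) by lra. replace C with ((C / (0 + 1/2)) * (1/2)) by field. nra. Qed.

Lemma eN_PI_bound : exists C, forall N, Rabs (eN N PI) <= C / (INR N + 1/2).
Proof. pose proof PI_RGT_0.
  destruct (K1 (PI/2)) as [C1 H1]. lra.
  destruct (K1 (3*PI/2)) as [C2 H2]. lra.
  assert (0 <= C1) by (eapply C_nonneg; apply H1).
  assert (0 <= C2) by (eapply C_nonneg; apply H2).
  exists (C1 + C2 + 4). intros N.
  pose proof (eN_double N (PI/2)) as Hd.
  replace (PI/2 + PI) with (3*PI/2) in Hd by field. replace (2 * (PI/2)) with PI in Hd by field.
  specialize (H1 (2*N)%nat). specialize (H2 (2*N)%nat).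
  assert (Hc := eN_cauchy N (2*N) PI ltac:(lia)).
  assert (HN : 0 < INR N + 1/2) by (pose proof (pos_INR N); lra).
  assert (A1 : C1 / (INR (2*N) + 1/2) <= C1 / (INR N + 1/2)).
  { apply div_mono; auto. rewrite mult_INR. simpl. pose proof (pos_INR N); lra. }
  assert (A2 : C2 / (INR (2*N) + 1/2) <= C2 / (INR N + 1/2)).
  { apply div_mono; auto. rewrite mult_INR. simpl. pose proof (pos_INR N); lra. }
  assert (A3 : 2 / (INR N + 1) <= 2 / (INR N + 1/2)) by (apply div_mono; lra).
  assert (E : (C1 + C2 + 4) / (INR N + 1/2) = C1 / (INR N + 1/2) + C2 / (INR N + 1/2) + 2 * (2 / (INR N + 1/2))) by (field; lra).
  rewrite E.
  set (x := eN N PI) in *. set (y := eN (2*N) PI) in *. set (u := eN (2*N) (PI/2)) in *. set (v := eN (2*N) (3*PI/2)) in *.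
  apply Rabs_le_between in H1. apply Rabs_le_between in H2. apply Rabs_le_between in Hc.
  apply Rabs_le. lra. Qed.

Lemma cN_2PI N : cN N (2*PI) = cN N 0.
Proof. unfold cN. apply fsum_ext. intros i _. f_equal.
  replace (INR (S i) * (2*PI)) with (0 + 2 * INR (S i) * PI) by ring. rewrite cos_period.
  f_equal. ring. Qed.

Lemma eN_pointwise t : 0 <= t <= 2*PI -> exists C, forall N, Rabs (eN N t) <= C / (INR N + 1/2).
Proof. intros Ht. pose proof PI_RGT_0.
  destruct eN_PI_bound as [Cp Hp].
  assert (0 <= Cp) by (eapply C_nonneg; apply Hp).
  assert (HZ : exists C, forall N, Rabs (eN N 0) <= C / (INR N + 1/2)).
  { exists (4 + 2 * Cp). intros N.
    pose proof (eN_double N 0) as Hd. replace (0 + PI) with PI in Hd by ring. replace (2*0) with 0 in Hd by ring.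
    assert (Hc := eN_cauchy N (2*N) 0 ltac:(lia)).
    specialize (Hp (2*N)%nat).
    assert (HN : 0 < INR N + 1/2) by (pose proof (pos_INR N); lra).
    assert (A1 : Cp / (INR (2*N) + 1/2) <= Cp / (INR N + 1/2)).
    { apply div_mono; auto. rewrite mult_INR. simpl. pose proof (pos_INR N); lra. }
    assert (A3 : 2 / (INR N + 1) <= 2 / (INR N + 1/2)) by (apply div_mono; lra).
    assert (E : (4 + 2*Cp) / (INR N + 1/2) = 2 * (2 / (INR N + 1/2)) + 2 * (Cp / (INR N + 1/2))) by (field; lra).
    rewrite E.
    set (x := eN N 0) in *. set (y := eN (2*N) 0) in *. set (z := eN (2*N) PI) in *.
    apply Rabs_le_between in Hp. apply Rabs_le_between in Hc.
    apply Rabs_le. lra. }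
  destruct (Req_dec t 0) as [->|Ht0]; auto.
  destruct (Req_dec t (2*PI)) as [->|Ht2].
  { destruct HZ as [C HC]. exists C. intros N. unfold eN. rewrite cN_2PI.
    replace (Pth (2*PI)) with (Pth 0) by (unfold Pth; field). apply HC. }
  destruct (K1 t) as [C1 H1]. lra.
  assert (0 <= C1) by (eapply C_nonneg; apply H1).
  exists (C1 + Cp). intros N. specialize (H1 N). specialize (Hp N).
  replace (eN N t) with ((eN N t - eN N PI) + eN N PI) by ring.
  eapply Rle_trans. apply Rabs_triang.
  replace ((C1 + Cp) / (INR N + 1/2)) with (C1 / (INR N + 1/2) + Cp / (INR N + 1/2)) by (field; pose proof (pos_INR N); lra).
  lra. Qed.

Lemma eN_unif t N : 0 <= t <= 2*PI -> Rabs (eN N t) <= 2 / (INR N + 1).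
Proof. intros Ht. destruct (eN_pointwise t Ht) as [C HC].
  assert (HC0 : 0 <= C) by (eapply C_nonneg; apply HC).
  destruct (Rle_lt_dec (Rabs (eN N t)) (2 / (INR N + 1))) as [|Hlt]; auto. exfalso.
  set (d := Rabs (eN N t) - 2 / (INR N + 1)).
  assert (Hd : 0 < d) by (unfold d; lra).
  destruct (INR_unbounded (C / d)) as [M0 HM0].
  set (M := Nat.max N M0).
  assert (HNM : (N <= M)%nat) by lia.
  assert (HM0M : INR M0 <= INR M) by (apply le_INR; lia).
  pose proof (eN_cauchy N M t HNM) as Hc. specialize (HC M).
  assert (HMd : C / (INR M + 1/2) < d).
  { assert (0 < INR M + 1/2) by (pose proof (pos_INR M); lra).
    apply (Rmult_lt_reg_r (INR M + 1/2)); auto. unfold Rdiv. rewrite Rmult_assoc, Rinv_l by lra.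
    assert (C / d < INR M + 1/2) by lra.
    apply (Rmult_lt_compat_r d) in H0; auto. unfold Rdiv in H0. rewrite Rmult_assoc, Rinv_l in H0 by lra. lra. }
  pose proof (Rabs_triang_inv (eN N t) (eN M t)).
  rewrite Rabs_minus_sym in Hc. unfold d in *. lra. Qed.

Lemma cR_plus (f g : R -> R) x : continuous f x -> continuous g x -> continuous (fun x => f x + g x) x.
Proof. intros; apply (continuous_plus f g); auto. Qed.
Lemma cR_mult (f g : R -> R) x : continuous f x -> continuous g x -> continuous (fun x => f x * g x) x.
Proof. intros; apply (continuous_mult f g); auto. Qed.
Lemma cR_const (c : R) x : continuous (fun _ : R => c) x.
Proof. apply continuous_const. Qed.
Lemma cR_scal c (f : R -> R) x : continuous f x -> continuous (fun x => c * f x) x.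
Proof. intros; apply cR_mult; auto; apply cR_const. Qed.
Lemma cR_opp (f : R -> R) x : continuous f x -> continuous (fun x => - f x) x.
Proof. intros. eapply continuous_ext. 2: apply (cR_scal (-1) f x H). intros; simpl; ring. Qed.
Lemma cR_minus (f g : R -> R) x : continuous f x -> continuous g x -> continuous (fun x => f x - g x) x.
Proof. intros. apply cR_plus; auto. apply cR_opp; auto. Qed.
Lemma cR_fsum (f : nat -> R -> R) n x : (forall i, (i < n)%nat -> continuous (f i) x) ->
  continuous (fun x => fsum (fun i => f i x) n) x.
Proof. induction n; simpl; intros H. apply cR_const. apply cR_plus. apply IHn; intros; apply H; lia. apply H; lia. Qed.
Lemma cR_derive (f : R -> R) (x l : R) : is_derive f x l -> continuous f x.
Proof. intros H. apply (ex_derive_continuous (K:=R_AbsRing) (V:=R_NormedModule)). exists l; auto. Qed.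

Lemma exRI (f : R -> R) a b : (forall x, Rmin a b <= x <= Rmax a b -> continuous f x) -> ex_RInt f a b.
Proof. intros H. apply (ex_RInt_continuous f). auto. Qed.

Lemma RInt_FTC (F f : R -> R) a b : a <= b -> (forall x, a <= x <= b -> is_derive F x (f x)) ->
  (forall x, a <= x <= b -> continuous f x) -> @eq R (RInt f a b) (F b - F a).
Proof. intros Hab Hd Hc. apply is_RInt_unique. 
  apply (is_RInt_derive F f a b).
  - intros x Hx. rewrite Rmin_left, Rmax_right in Hx by lra. auto.
  - intros x Hx. rewrite Rmin_left, Rmax_right in Hx by lra. auto. Qed.

Lemma sum_n_fsum (a : nat -> R) N : sum_n a N = fsum a (S N).
Proof. induction N. rewrite sum_O. simpl. ring. rewrite sum_Sn, IHN. simpl. reflexivity. Qed.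

Lemma is_series_from_bound (a : nat -> R) l B :
  (forall N, Rabs (fsum a N - l) <= B / (INR N + 1)) -> is_series a l.
Proof. intros H. unfold is_series. change (is_lim_seq (sum_n a) l).
  apply is_lim_seq_spec. intros eps.
  assert (HB : 0 <= B). { specialize (H O). simpl in H. pose proof (Rabs_pos (0 - l)). replace B with (B / (0+1)) by field. lra. }
  destruct (INR_unbounded (B / eps)) as [M HM]. exists M. intros n Hn.
  rewrite sum_n_fsum. eapply Rle_lt_trans. apply H.
  pose proof (cond_pos eps). assert (HnM : INR M <= INR n) by (apply le_INR; lia).
  rewrite S_INR. assert (0 < INR n + 1 + 1) by (pose proof (pos_INR n); lra).
  apply (Rmult_lt_reg_r (INR n + 1 + 1)); auto. unfold Rdiv. rewrite Rmult_assoc, Rinv_l by lra.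
  assert (B / eps < INR n + 1 + 1) by lra.
  apply (Rmult_lt_compat_r eps) in H2; auto. unfold Rdiv in H2. rewrite Rmult_assoc, Rinv_l in H2 by lra. lra. Qed.

Lemma phi_ext j x : phi j x = sqrt 2 * sin ((INR j * PI) * x + 0).
Proof. unfold phi. f_equal. f_equal. ring. Qed.
Lemma phi_smooth j : Smooth (phi j).
Proof. eapply Smooth_ext. 2: apply (Smooth_sin (sqrt 2) (INR j * PI) 0). intros; rewrite phi_ext; auto. Qed.
Lemma phi_cont j x : continuous (phi j) x.
Proof. apply Smooth_cont, phi_smooth. Qed.
Lemma phi_0 j : phi j 0 = 0.
Proof. unfold phi. rewrite Rmult_0_r, sin_0. ring. Qed.
Lemma phi_1 j : phi j 1 = 0.
Proof. unfold phi. rewrite Rmult_1_r, sin_INR_PI. ring. Qed.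
Lemma phi_bound j x : Rabs (phi j x) <= sqrt 2.
Proof. unfold phi. rewrite Rabs_mult. rewrite (Rabs_right (sqrt 2)) by (apply Rle_ge, sqrt_pos).
  pose proof (SIN_bound (INR j * PI * x)). assert (Rabs (sin (INR j * PI * x)) <= 1) by (apply Rabs_le; lra).
  pose proof (sqrt_pos 2). nra. Qed.

Definition dphi j x := sqrt 2 * (INR j * PI) * cos (INR j * PI * x).
Lemma phi_deriv j x : is_derive (phi j) x (dphi j x).
Proof. unfold phi, dphi. auto_derive; auto. ring. Qed.
Lemma dphi_deriv j x : is_derive (dphi j) x (- lam j * phi j x).
Proof. unfold phi, dphi, lam. auto_derive; auto. ring. Qed.
Lemma dphi_cont j x : continuous (dphi j) x.
Proof. eapply cR_derive. apply dphi_deriv. Qed.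

Lemma lam_pos j : 0 < lam (S j).
Proof. unfold lam. pose proof (INRS_pos j). pose proof PI_RGT_0. apply pow_lt. apply Rmult_lt_0_compat; lra. Qed.

Lemma RInt_plus' (f g : R -> R) a b : ex_RInt f a b -> ex_RInt g a b -> @eq R (RInt (fun x => f x + g x) a b) (RInt f a b + RInt g a b).
Proof. intros; apply (RInt_plus f g); auto. Qed.
Lemma RInt_minus' (f g : R -> R) a b : ex_RInt f a b -> ex_RInt g a b -> @eq R (RInt (fun x => f x - g x) a b) (RInt f a b - RInt g a b).
Proof. intros; apply (RInt_minus f g); auto. Qed.
Lemma RInt_scal' (f : R -> R) c a b : ex_RInt f a b -> @eq R (RInt (fun x => c * f x) a b) (c * RInt f a b).
Proof. intros; apply (RInt_scal f); auto. Qed.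
Lemma RInt_ext' (f g : R -> R) a b : (forall x, Rmin a b < x < Rmax a b -> f x = g x) -> @eq R (RInt f a b) (RInt g a b).
Proof. apply RInt_ext. Qed.

Lemma exRI01 (f : R -> R) : (forall x, 0 <= x <= 1 -> continuous f x) -> ex_RInt f 0 1.
Proof. intros H. apply exRI. rewrite Rmin_left, Rmax_right by lra. auto. Qed.

Lemma is_derive_mult' (f g : R -> R) x a b c : is_derive f x a -> is_derive g x b -> c = a * g x + f x * b ->
  is_derive (fun t => f t * g t) x c.
Proof. intros Hf Hg ->. apply (is_derive_mult f g x a b Hf Hg). intros; apply Rmult_comm. Qed.

Lemma coef_ibp (g g1 g2 : R -> R) j :
  (forall x, is_derive g x (g1 x)) -> (forall x, is_derive g1 x (g2 x)) -> (forall x, continuous g2 x) ->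
  g 0 = 0 -> g 1 = 0 ->
  ip g (phi j) * lam j = ip (fun x => - g2 x) (phi j).
Proof. intros D1 D2 C2 G0 G1. unfold ip.
  assert (Cg : forall x, continuous g x) by (intros; eapply cR_derive; apply D1).
  assert (Cg1 : forall x, continuous g1 x) by (intros; eapply cR_derive; apply D2).
  assert (S1 : RInt (fun x => g2 x * phi j x + g1 x * dphi j x) 0 1 = 0).
  { rewrite (RInt_FTC (fun x => g1 x * phi j x)). rewrite phi_0, phi_1. lra. lra.
    intros; apply is_derive_mult' with (a := g2 x) (b := dphi j x). auto. apply phi_deriv. auto.
    intros; apply cR_plus; apply cR_mult; auto using phi_cont, dphi_cont. }
  assert (S2 : RInt (fun x => g1 x * dphi j x + g x * (- lam j * phi j x)) 0 1 = 0).
  { rewrite (RInt_FTC (fun x => g x * dphi j x)). rewrite G0, G1. lra. lra.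
    intros; apply is_derive_mult' with (a := g1 x) (b := - lam j * phi j x). auto. apply dphi_deriv. auto.
    intros; apply cR_plus; apply cR_mult; auto using phi_cont, dphi_cont. apply cR_scal. apply phi_cont. }
  rewrite RInt_plus' in S1 by (apply exRI01; intros; apply cR_mult; auto using phi_cont, dphi_cont).
  rewrite RInt_plus' in S2. 2,3: apply exRI01; intros; apply cR_mult; auto using phi_cont, dphi_cont.
  2: apply cR_scal; apply phi_cont.
  rewrite (RInt_ext' (fun x => g x * (- lam j * phi j x)) (fun x => (- lam j) * (g x * phi j x))) in S2 by (intros; ring).
  rewrite RInt_scal' in S2 by (apply exRI01; intros; apply cR_mult; auto using phi_cont).
  rewrite (RInt_ext' (fun x => - g2 x * phi j x) (fun x => (-1) * (g2 x * phi j x))) by (intros; ring).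
  rewrite RInt_scal' by (apply exRI01; intros; apply cR_mult; auto using phi_cont).
  lra. Qed.

Definition kN2 N x y := fsum (fun j => phi (S j) x * phi (S j) y / lam (S j)) N.
Definition kern x y := Rmin x y - x * y.

Lemma fsum_minus f g n : fsum (fun i => f i - g i) n = fsum f n - fsum g n.
Proof. induction n; simpl; [lra|]. rewrite IHn; lra. Qed.

Lemma fsum_div f c n : fsum (fun i => f i / c) n = fsum f n / c.
Proof. unfold Rdiv. rewrite Rmult_comm, <- fsum_scal. apply fsum_ext; intros; ring. Qed.

Lemma kN2_cN N x y : kN2 N x y = (cN N (PI * Rabs (x - y)) - cN N (PI * (x + y))) / PI^2.
Proof. unfold kN2, cN. rewrite <- fsum_minus, <- fsum_div.
  apply fsum_ext. intros j _. unfold phi, lam. pose proof (INRS_pos j) as Hn. pose proof PI_RGT_0.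
  set (n := INR (S j)) in *.
  assert (Hc : cos (n * (PI * Rabs (x - y))) = cos (n * PI * x - n * PI * y)).
  { unfold Rabs. destruct Rcase_abs. rewrite <- cos_neg. f_equal. ring. f_equal. ring. }
  rewrite Hc. replace (n * (PI * (x + y))) with (n * PI * x + n * PI * y) by ring.
  rewrite cos_minus, cos_plus.
  replace (sqrt 2 * sin (n * PI * x) * (sqrt 2 * sin (n * PI * y))) with ((sqrt 2 * sqrt 2) * sin (n * PI * x) * sin (n * PI * y)) by ring.
  rewrite sqrt_sqrt by lra. field. split; lra. Qed.

Lemma kern_Pth x y : kern x y = (Pth (PI * Rabs (x - y)) - Pth (PI * (x + y))) / PI^2.
Proof. pose proof PI_RGT_0. unfold kern, Pth, Rmin, Rabs. destruct Rle_dec; destruct Rcase_abs; try lra; try (field; lra); (assert (x = y) by lra; subst; field; lra). Qed.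

Lemma kern_approx N x y : 0 <= x <= 1 -> 0 <= y <= 1 -> Rabs (kN2 N x y - kern x y) <= 4 / (PI^2 * (INR N + 1)).
Proof. intros Hx Hy. pose proof PI_RGT_0. rewrite kN2_cN, kern_Pth.
  assert (E : (cN N (PI * Rabs (x - y)) - cN N (PI * (x + y))) / PI ^ 2 -
    (Pth (PI * Rabs (x - y)) - Pth (PI * (x + y))) / PI ^ 2 = (eN N (PI * Rabs (x - y)) - eN N (PI * (x + y))) * / PI^2).
  { unfold eN. field. lra. }
  rewrite E. rewrite Rabs_mult. rewrite (Rabs_right (/ PI^2)) by (left; apply Rinv_0_lt_compat; nra).
  assert (H1 : Rabs (eN N (PI * Rabs (x - y))) <= 2 / (INR N + 1)).
  { apply eN_unif. pose proof (Rabs_pos (x - y)). assert (Rabs (x-y) <= 1) by (apply Rabs_le; lra). nra. }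
  assert (H2 : Rabs (eN N (PI * (x + y))) <= 2 / (INR N + 1)) by (apply eN_unif; nra).
  set (e1 := eN N (PI * Rabs (x - y))) in *. set (e2 := eN N (PI * (x + y))) in *.
  pose proof (Rabs_triang e1 (- e2)) as H3. rewrite Rabs_Ropp in H3.
  replace (4 / (PI^2 * (INR N + 1))) with ((2 / (INR N + 1) + 2 / (INR N + 1)) * / PI^2) by (field; pose proof (pos_INR N); split; lra).
  apply Rmult_le_compat_r. left; apply Rinv_0_lt_compat; nra. 
  unfold Rminus. lra. Qed.

Lemma kern_cont x y : continuous (fun y => kern x y) y.
Proof. eapply continuous_ext with (f := fun y => (x + y - Rabs (x - y)) / 2 - x * y).
  - intros t. unfold kern, Rmin, Rabs. destruct Rle_dec, Rcase_abs; lra.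
  - apply cR_minus. unfold Rdiv. apply cR_mult. apply cR_minus. apply cR_plus. apply cR_const. apply continuous_id.
    apply continuous_Rabs_comp. apply cR_minus. apply cR_const. apply continuous_id. apply cR_const.
    apply cR_scal. apply continuous_id. Qed.

Lemma RInt_Chasles' (f : R -> R) a b c : ex_RInt f a b -> ex_RInt f b c -> @eq R (RInt f a b + RInt f b c) (RInt f a c).
Proof. intros; apply (RInt_Chasles f); auto. Qed.

Lemma is_derive_scal' (f : R -> R) x k a c : is_derive f x a -> c = k * a -> is_derive (fun t => k * f t) x c.
Proof. intros H ->. apply (is_derive_scal f x k a H). Qed.

Lemma is_derive_id' (x : R) : is_derive (fun t : R => t) x 1.
Proof. apply (is_derive_id (K:=R_AbsRing) x). Qed.

Lemma green (g g1 g2 : R -> R) x :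
  (forall x, is_derive g x (g1 x)) -> (forall x, is_derive g1 x (g2 x)) -> (forall x, continuous g2 x) ->
  g 0 = 0 -> g 1 = 0 -> 0 <= x <= 1 ->
  @eq R (RInt (fun y => kern x y * (- g2 y)) 0 1) (g x).
Proof. intros D1 D2 C2 G0 G1 Hx.
  assert (Cf : forall y, continuous (fun y => kern x y * (- g2 y)) y).
  { intros y. apply cR_mult. apply kern_cont. apply cR_opp. auto. }
  rewrite <- (RInt_Chasles' _ 0 x 1) by (apply exRI; auto).
  rewrite (RInt_ext' _ (fun y => (-(1-x)) * (y * g2 y)) 0 x).
  2: { intros y Hy. rewrite Rmin_left, Rmax_right in Hy by lra. unfold kern. rewrite Rmin_right by lra. ring. }
  rewrite (RInt_ext' _ (fun y => (-x) * ((1-y) * g2 y)) x 1).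
  2: { intros y Hy. rewrite Rmin_left, Rmax_right in Hy by lra. unfold kern. rewrite Rmin_left by lra. ring. }
  rewrite (RInt_FTC (fun y => (1-x) * (g y - y * g1 y))); try lra.
  2: { intros y _. apply is_derive_scal' with (a := g1 y - (1 * g1 y + y * g2 y)).
       apply is_derive_minus' with (a := g1 y) (b := 1 * g1 y + y * g2 y). auto.
       apply is_derive_mult' with (a := 1) (b := g2 y). apply is_derive_id'. auto. auto. auto. ring. }
  2: { intros y _. apply cR_scal. apply cR_mult. apply continuous_id. auto. }
  rewrite (RInt_FTC (fun y => x * (- ((1-y) * g1 y) - g y))); try lra.
  2: { intros y _. apply is_derive_scal' with (a := - ((-1) * g1 y + (1-y) * g2 y) - g1 y).
       apply is_derive_minus' with (a := - ((-1) * g1 y + (1-y) * g2 y)) (b := g1 y).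
       apply (is_derive_opp (fun t => (1-t) * g1 t) y).
       apply is_derive_mult' with (a := -1) (b := g2 y).
       apply is_derive_minus' with (a := 0) (b := 1). apply (is_derive_const (K:=R_AbsRing) (V:=R_NormedModule)). apply is_derive_id'. ring. auto. auto. auto. auto. ring. }
  2: { intros y _. apply cR_scal. apply cR_mult. apply cR_minus. apply cR_const. apply continuous_id. auto. }
  rewrite G0, G1. ring. Qed.

Lemma RInt_fsum (f : nat -> R -> R) n a b : (forall i, (i < n)%nat -> ex_RInt (f i) a b) ->
  @eq R (RInt (fun x => fsum (fun i => f i x) n) a b) (fsum (fun i => RInt (f i) a b) n).
Proof. induction n; simpl; intros H.
- rewrite RInt_const. simpl. unfold scal; simpl. unfold mult; simpl. ring.
- rewrite RInt_plus'. rewrite IHn. auto. intros; apply H; lia.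
  apply ex_RInt_ext with (f := fun x => fsum (fun i => f i x) n). intros; auto.
  clear IHn. induction n; simpl. apply ex_RInt_const. 
  apply (ex_RInt_plus (fun x => fsum (fun i => f i x) n) (f n)). apply IHn; intros; apply H; lia. apply H; lia.
  apply H; lia. Qed.

Lemma bound01 (f : R -> R) : (forall x, continuous f x) -> exists B, 0 <= B /\ forall x, 0 <= x <= 1 -> Rabs (f x) <= B.
Proof. intros Hf. destruct (continuity_ab_maj (fun x => Rabs (f x)) 0 1) as [M [HM _]]. lra.
  intros c _. apply continuity_pt_filterlim. apply continuous_Rabs_comp. apply Hf.
  exists (Rabs (f M)). split. apply Rabs_pos. auto. Qed.

Lemma ex_RInt_cont01 (f : R -> R) : (forall x, continuous f x) -> ex_RInt f 0 1.
Proof. intros H. apply exRI01. auto. Qed.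

Lemma parseval_bound (h g g1 g2 : R -> R) :
  (forall x, continuous h x) ->
  (forall x, is_derive g x (g1 x)) -> (forall x, is_derive g1 x (g2 x)) -> (forall x, continuous g2 x) ->
  g 0 = 0 -> g 1 = 0 ->
  exists B, forall N, Rabs (fsum (fun j => ip h (phi (S j)) * ip g (phi (S j))) N - ip h g) <= B / (INR N + 1).
Proof. intros Ch D1 D2 C2 G0 G1.
  assert (Cg : forall x, continuous g x) by (intros; eapply cR_derive; apply D1).
  destruct (bound01 h Ch) as [Hb [Hb0 HHb]].
  destruct (bound01 g2 C2) as [Gb [Gb0 HGb]].
  pose proof PI_RGT_0 as HPI.
  exists (Hb * (4 / PI^2 * Gb)). intros N.
  set (G := fun y => - g2 y).
  assert (CG : forall y, continuous G y) by (intros; apply cR_opp; auto).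
  set (beta := fun j => ip G (phi (S j)) / lam (S j)).
  set (SN := fun x => fsum (fun j => phi (S j) x * beta j) N).
  assert (CSN : forall x, continuous SN x).
  { intros x. apply cR_fsum. intros. apply cR_mult. apply phi_cont. apply cR_const. }
  assert (S1 : fsum (fun j => ip h (phi (S j)) * ip g (phi (S j))) N = RInt (fun x => h x * SN x) 0 1).
  { unfold SN. rewrite (RInt_ext' _ (fun x => fsum (fun j => beta j * (h x * phi (S j) x)) N)).
    2: { intros. rewrite <- fsum_scal. apply fsum_ext. intros; ring. }
    rewrite RInt_fsum. 2: { intros. apply ex_RInt_cont01. intros. apply cR_scal. apply cR_mult; auto. apply phi_cont. }
    apply fsum_ext. intros j _. rewrite RInt_scal'. 2: apply ex_RInt_cont01; intros; apply cR_mult; auto; apply phi_cont.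
    unfold beta. fold (ip h (phi (S j))).
    pose proof (coef_ibp g g1 g2 (S j) D1 D2 C2 G0 G1) as Hc. pose proof (lam_pos j).
    replace (ip g (phi (S j))) with (ip G (phi (S j)) / lam (S j)). field. lra.
    fold G in Hc. rewrite <- Hc. field. lra. }
  assert (S3 : forall x, SN x = RInt (fun y => kN2 N x y * G y) 0 1).
  { intros x. unfold kN2. rewrite (RInt_ext' _ (fun y => fsum (fun j => (phi (S j) x / lam (S j)) * (G y * phi (S j) y)) N)).
    2: { intros. rewrite Rmult_comm, <- fsum_scal. apply fsum_ext. intros. pose proof (lam_pos i). field. lra. }
    rewrite RInt_fsum. 2: { intros. apply ex_RInt_cont01. intros. apply cR_scal. apply cR_mult; auto. apply phi_cont. }
    unfold SN. apply fsum_ext. intros j _. rewrite RInt_scal'. 2: apply ex_RInt_cont01; intros; apply cR_mult; auto; apply phi_cont.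
    unfold beta, ip. pose proof (lam_pos j). field. lra. }
  assert (S4 : ip h g = RInt (fun x => h x * RInt (fun y => kern x y * G y) 0 1) 0 1).
  { unfold ip. apply RInt_ext'. intros x Hx. rewrite Rmin_left, Rmax_right in Hx by lra. unfold G.
    rewrite (green g g1 g2 x D1 D2 C2 G0 G1) by lra. auto. }
  assert (S5 : ip h g = RInt (fun x => h x * g x) 0 1) by reflexivity.
  rewrite S1, S5. rewrite <- RInt_minus'.
  2,3: apply ex_RInt_cont01; intros; apply cR_mult; auto.
  replace (Hb * (4 / PI ^ 2 * Gb) / (INR N + 1)) with ((1 - 0) * (Hb * (4 / (PI^2 * (INR N + 1)) * Gb))) by (field; pose proof (pos_INR N); split; lra).
  apply abs_RInt_le_const. lra.
  apply (ex_RInt_minus (fun x => h x * SN x) (fun x => h x * g x)); apply ex_RInt_cont01; intros; apply cR_mult; auto.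
  intros x Hx. rewrite <- Rmult_minus_distr_l. rewrite Rabs_mult.
  apply Rmult_le_compat. apply Rabs_pos. apply Rabs_pos. auto.
  rewrite S3, <- (green g g1 g2 x D1 D2 C2 G0 G1 Hx). fold G.
  rewrite <- RInt_minus'.
  2: { apply ex_RInt_cont01; intros. apply cR_mult; auto. unfold kN2. apply cR_fsum. intros. unfold Rdiv. apply cR_mult. apply cR_mult. apply cR_const. apply phi_cont. apply cR_const. }
  2: { apply ex_RInt_cont01; intros. apply cR_mult; auto. apply kern_cont. }
  replace (4 / (PI ^ 2 * (INR N + 1)) * Gb) with ((1 - 0) * (4 / (PI ^ 2 * (INR N + 1)) * Gb)) by ring.
  apply abs_RInt_le_const. lra.
  apply (ex_RInt_minus (fun y => kN2 N x y * G y) (fun y => kern x y * G y)).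
  { apply ex_RInt_cont01; intros. apply cR_mult; auto. unfold kN2. apply cR_fsum. intros. unfold Rdiv. apply cR_mult. apply cR_mult. apply cR_const. apply phi_cont. apply cR_const. }
  { apply ex_RInt_cont01; intros. apply cR_mult; auto. apply kern_cont. }
  intros y Hy. rewrite <- Rmult_minus_distr_r, Rabs_mult. apply Rmult_le_compat. apply Rabs_pos. apply Rabs_pos.
  apply kern_approx; auto. unfold G. rewrite Rabs_Ropp. auto. Qed.

Lemma parseval (h g g1 g2 : R -> R) :
  (forall x, continuous h x) ->
  (forall x, is_derive g x (g1 x)) -> (forall x, is_derive g1 x (g2 x)) -> (forall x, continuous g2 x) ->
  g 0 = 0 -> g 1 = 0 ->
  is_series (fun j => ip h (phi (S j)) * ip g (phi (S j))) (ip h g).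
Proof. intros. destruct (parseval_bound h g g1 g2) as [B HB]; auto.
  apply is_series_from_bound with B. auto. Qed.

Lemma tf_deriv mu : test_fun mu -> forall i x, is_derive (Derive_n mu i) x (Derive_n mu (S i) x).
Proof. intros [Hd _] i x. apply Derive_correct. apply (Hd (S i) x). Qed.

Lemma tf_cont mu : test_fun mu -> forall i x, continuous (Derive_n mu i) x.
Proof. intros H i x. eapply cR_derive. apply tf_deriv; auto. Qed.

Lemma tf_supp mu : test_fun mu -> exists a b, 0 < a /\ a < b /\ b < 1 /\
  forall i x, (x < a \/ b < x) -> Derive_n mu i x = 0.
Proof. intros [_ [a [b [Ha [Hab [Hb Hz]]]]]]. exists a, b. repeat split; auto.
  intros i x Hx. rewrite (Derive_n_ext_loc mu (fun _ => 0)).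
  - destruct i; [reflexivity| apply Derive_n_const].
  - destruct Hx as [Hx|Hx].
    + apply (locally_open (fun u => u < a)). apply open_lt. intros; apply Hz; auto. auto.
    + apply (locally_open (fun u => b < u)). apply open_gt. intros; apply Hz; auto. auto.
Qed.

Lemma is_derive_fsum (f df : nat -> R -> R) n x : (forall i, (i < n)%nat -> is_derive (f i) x (df i x)) ->
  is_derive (fun x => fsum (fun i => f i x) n) x (fsum (fun i => df i x) n).
Proof. induction n; simpl; intros H.
- apply (is_derive_const (K:=R_AbsRing) (V:=R_NormedModule)).
- apply is_derive_plus' with (a := fsum (fun i => df i x) n) (b := df n x). apply IHn; intros; apply H; lia. apply H; lia. auto. Qed.

Lemma Derive_zero (f : R -> R) x : (forall t, f t = 0) -> Derive f x = 0.
Proof. intros H. rewrite (Derive_ext f (fun _ => 0)) by auto. apply Derive_const. Qed.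

Lemma expand (w : R -> R) : Smooth w -> forall n, exists W : nat -> R -> R,
  (forall i, Smooth (W i)) /\ (forall x, W n x = w x) /\ (forall i x, (n < i)%nat -> W i x = 0) /\
  forall mu, test_fun mu -> forall x,
    Derive_n (fun x => mu x * w x) n x = fsum (fun i => W i x * Derive_n mu i x) (S n).
Proof. intros Hw n. induction n.
- exists (fun i => match i with O => w | S _ => fun _ => 0 end). repeat split.
  + intros [|i]; auto. apply Smooth_const.
  + intros [|i] x Hi. lia. auto.
  + intros mu _ x. simpl. ring.
- destruct IHn as [W [HWs [HWn [HW0 HWe]]]].
  exists (fun i x => Derive (W i) x + match i with O => 0 | S k => W k x end). repeat split.
  + intros [|i]. 
    * eapply Smooth_ext. 2: apply (Smooth_plus _ _ (Smooth_Derive _ (HWs O)) (Smooth_const 0)). intros; auto.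
    * apply (Smooth_plus _ _ (Smooth_Derive _ (HWs (S i))) (HWs i)).
  + intros x. rewrite Derive_zero. rewrite HWn. ring. intros; apply HW0; lia.
  + intros [|i] x Hi. lia. rewrite Derive_zero. rewrite HW0. ring. lia. intros; apply HW0; lia.
  + intros mu Hmu x. simpl Derive_n at 1.
    rewrite (Derive_ext _ (fun x => fsum (fun i => W i x * Derive_n mu i x) (S n))) by (intros; apply HWe; auto).
    rewrite (is_derive_unique _ x (fsum (fun i => Derive (W i) x * Derive_n mu i x + W i x * Derive_n mu (S i) x) (S n))).
    2: { apply (is_derive_fsum (fun i x => W i x * Derive_n mu i x) (fun i x => Derive (W i) x * Derive_n mu i x + W i x * Derive_n mu (S i) x)).
         intros i _. apply is_derive_mult' with (a := Derive (W i) x) (b := Derive_n mu (S i) x).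
         apply Smooth_is_derive; auto. apply tf_deriv; auto. auto. }
    rewrite fsum_plus.
    rewrite (fsum_ext (fun i => (Derive (W i) x + match i with O => 0 | S k => W k x end) * Derive_n mu i x)
       (fun i => Derive (W i) x * Derive_n mu i x + match i with O => 0 | S k => W k x * Derive_n mu i x end))
       by (intros [|i] _; ring).
    rewrite fsum_plus. rewrite (fsum_shift (fun i => match i with O => 0 | S k => W k x * Derive_n mu i x end)).
    change (fsum (fun i : nat => Derive (W i) x * Derive_n mu i x) (S (S n))) with
      (fsum (fun i : nat => Derive (W i) x * Derive_n mu i x) (S n) + Derive (W (S n)) x * Derive_n mu (S n) x).
    rewrite (Derive_zero (W (S n))) by (intros; apply HW0; lia). ring.
Qed.

Lemma is_series_scal' (a : nat -> R) l c : is_series a l -> is_series (fun n => c * a n) (c * l).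
Proof. intros H. apply (is_series_scal_l c a l H). Qed.
Lemma is_series_plus' (a b : nat -> R) la lb : is_series a la -> is_series b lb -> is_series (fun n => a n + b n) (la + lb).
Proof. intros Ha Hb. apply (is_series_plus a b la lb Ha Hb). Qed.
Lemma is_series_ext' (a b : nat -> R) l : (forall n, a n = b n) -> is_series a l -> is_series b l.
Proof. intros H Ha. apply (is_series_ext a b l H Ha). Qed.

Lemma prod_expr mu w : test_fun mu -> Smooth w -> forall n,
  exists E : R -> R, (forall x, Derive_n (fun x => mu x * w x) n x = E x) /\ forall x, ex_derive E x.
Proof. intros Hmu Hw n. destruct (expand w Hw n) as [W [HWs [_ [_ HWe]]]].
  exists (fun x => fsum (fun i => W i x * Derive_n mu i x) (S n)). split. intros; apply HWe; auto.
  intros x. eexists. apply (is_derive_fsum (fun i x => W i x * Derive_n mu i x) (fun i x => Derive (W i) x * Derive_n mu i x + W i x * Derive_n mu (S i) x)).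
  intros i _. apply is_derive_mult' with (a := Derive (W i) x) (b := Derive_n mu (S i) x).
  apply Smooth_is_derive; auto. apply tf_deriv; auto. auto. Qed.

Lemma prod_deriv mu w : test_fun mu -> Smooth w -> forall n x,
  is_derive (Derive_n (fun x => mu x * w x) n) x (Derive_n (fun x => mu x * w x) (S n) x).
Proof. intros Hmu Hw n x. apply Derive_correct. destruct (prod_expr mu w Hmu Hw n) as [E [HE HE']].
  apply (ex_derive_ext E). intros; auto. apply HE'. Qed.

Lemma prod_cont mu w : test_fun mu -> Smooth w -> forall n x, continuous (Derive_n (fun x => mu x * w x) n) x.
Proof. intros. eapply cR_derive. apply prod_deriv; auto. Qed.

Lemma prod_supp mu w : test_fun mu -> Smooth w -> forall n, Derive_n (fun x => mu x * w x) n 0 = 0 /\ Derive_n (fun x => mu x * w x) n 1 = 0.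
Proof. intros Hmu Hw n. destruct (tf_supp mu Hmu) as [a [b [Ha [Hab [Hb Hz]]]]].
  destruct (expand w Hw n) as [W [_ [_ [_ HWe]]]]. rewrite !HWe by auto.
  split; apply fsum_zero; intros; rewrite Hz by lra; ring. Qed.

Lemma ip_opp (u v : R -> R) : (forall x, continuous u x) -> (forall x, continuous v x) -> ip (fun x => - u x) v = - ip u v.
Proof. intros Hu Hv. unfold ip. rewrite (RInt_ext' _ (fun x => (-1) * (u x * v x))) by (intros; ring).
  rewrite RInt_scal'. ring. apply ex_RInt_cont01. intros; apply cR_mult; auto. Qed.

Lemma lam_pow_coef mu w j : test_fun mu -> Smooth w -> forall n,
  lam j ^ n * ip (fun x => mu x * w x) (phi j) = (-1)^n * ip (Derive_n (fun x => mu x * w x) (2*n)) (phi j).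
Proof. intros Hmu Hw n. induction n.
- simpl. ring_simplify. reflexivity.
- replace (2 * S n)%nat with (S (S (2*n))) by lia.
  replace (lam j ^ S n * ip (fun x => mu x * w x) (phi j)) with (lam j * (lam j ^ n * ip (fun x => mu x * w x) (phi j))) by (simpl; ring).
  rewrite IHn.
  pose proof (coef_ibp (Derive_n (fun x => mu x * w x) (2*n)) (Derive_n (fun x => mu x * w x) (S (2*n)))
    (Derive_n (fun x => mu x * w x) (S (S (2*n)))) j) as Hc.
  destruct (prod_supp mu w Hmu Hw (2*n)) as [Z0 Z1].
  rewrite ip_opp in Hc.
  2: apply prod_cont; auto. 2: apply phi_cont.
  replace ((-1) ^ S n * ip (Derive_n (fun x => mu x * w x) (S (S (2 * n)))) (phi j)) with
    ((-1)^n * - ip (Derive_n (fun x => mu x * w x) (S (S (2 * n)))) (phi j)) by (simpl; ring).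
  rewrite <- Hc; auto. ring.
  intros; apply prod_deriv; auto. intros; apply prod_deriv; auto. intros; apply prod_cont; auto.
Qed.

Lemma ibp_step (u u' v v' : R -> R) :
  (forall x, is_derive u x (u' x)) -> (forall x, is_derive v x (v' x)) ->
  (forall x, continuous u' x) -> (forall x, continuous v' x) ->
  u 0 * v 0 = 0 -> u 1 * v 1 = 0 -> ip u' v = - ip u v'.
Proof. intros Du Dv Cu' Cv' Z0 Z1.
  assert (Cu : forall x, continuous u x) by (intros; eapply cR_derive; apply Du).
  assert (Cv : forall x, continuous v x) by (intros; eapply cR_derive; apply Dv).
  assert (S : RInt (fun x => u' x * v x + u x * v' x) 0 1 = 0).
  { rewrite (RInt_FTC (fun x => u x * v x)). lra. lra.
    intros; apply is_derive_mult' with (a := u' x) (b := v' x); auto.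
    intros; apply cR_plus; apply cR_mult; auto. }
  rewrite RInt_plus' in S by (apply ex_RInt_cont01; intros; apply cR_mult; auto).
  unfold ip. lra. Qed.

Lemma ibp_pair f g w1 w2 : test_fun f -> test_fun g -> Smooth w1 -> Smooth w2 -> forall k a b,
  ip (Derive_n (fun x => f x * w1 x) (a + k)) (Derive_n (fun x => g x * w2 x) b) =
  (-1)^k * ip (Derive_n (fun x => f x * w1 x) a) (Derive_n (fun x => g x * w2 x) (b + k)).
Proof. intros Hf Hg H1 H2 k a. induction k; intros b.
- rewrite !Nat.add_0_r. simpl. ring.
- replace (a + S k)%nat with (S (a + k)) by lia. replace (b + S k)%nat with (S b + k)%nat by lia.
  rewrite ibp_step with (u := Derive_n (fun x => f x * w1 x) (a + k)) (v' := Derive_n (fun x => g x * w2 x) (S b)).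
  rewrite IHk. simpl. ring.
  intros; apply prod_deriv; auto. intros; apply prod_deriv; auto.
  intros; apply prod_cont; auto. intros; apply prod_cont; auto.
  destruct (prod_supp f w1 Hf H1 (a+k)) as [-> _]. ring.
  destruct (prod_supp f w1 Hf H1 (a+k)) as [_ ->]. ring.
Qed.

Lemma pair_series f g w1 w2 n : test_fun f -> test_fun g -> Smooth w1 -> Smooth w2 ->
  is_series (fun j => lam (S j) ^ n * (ip (fun x => f x * w1 x) (phi (S j)) * ip (fun x => g x * w2 x) (phi (S j))))
    (ip (Derive_n (fun x => f x * w1 x) n) (Derive_n (fun x => g x * w2 x) n)).
Proof. intros Hf Hg H1 H2.
  set (F := fun x => f x * w1 x). set (G := fun x => g x * w2 x).
  assert (P := parseval (Derive_n F (2*n)) G (Derive_n G 1) (Derive_n G 2)).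
  destruct (prod_supp g w2 Hg H2 0) as [Z0 Z1].
  specialize (P (prod_cont f w1 Hf H1 (2*n))).
  specialize (P (fun x => prod_deriv g w2 Hg H2 0 x)).
  specialize (P (fun x => prod_deriv g w2 Hg H2 1 x)).
  specialize (P (prod_cont g w2 Hg H2 2) Z0 Z1).
  apply (is_series_scal' _ _ ((-1)^n)) in P.
  assert (E : (-1)^n * ip (Derive_n F (2*n)) G = ip (Derive_n F n) (Derive_n G n)).
  { replace (2*n)%nat with (n + n)%nat by lia.
    pose proof (ibp_pair f g w1 w2 Hf Hg H1 H2 n n 0) as HP. fold F G in HP. change (0 + n)%nat with n in HP.
    change (ip (Derive_n F (n + n)) G) with (ip (Derive_n F (n + n)) (Derive_n G 0)).
    rewrite HP. replace ((-1)^n * ((-1)^n * ip (Derive_n F n) (Derive_n G n))) with (((-1)*(-1))^n * ip (Derive_n F n) (Derive_n G n)) by (rewrite Rpow_mult_distr; ring).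
    replace ((-1)*(-1)) with 1 by ring. rewrite pow1. ring. }
  rewrite E in P. eapply is_series_ext'. 2: apply P.
  intros j. pose proof (lam_pow_coef f w1 (S j) Hf H1 n) as L. fold F in L.
  transitivity (((-1)^n * ip (Derive_n F (2*n)) (phi (S j))) * ip G (phi (S j))). ring.
  rewrite <- L. ring. Qed.

Definition Monic d (F : R -> R) := exists a : nat -> R, forall l, F l = fsum (fun n => a n * l^n) d + l^d.

Lemma monic_ext d F G : (forall l, F l = G l) -> Monic d F -> Monic d G.
Proof. intros H [a Ha]. exists a. intros l. rewrite <- H. auto. Qed.

Lemma monic_0 : Monic 0 (fun _ => 1).
Proof. exists (fun _ => 0). intros; simpl; ring. Qed.

Lemma monic_mul d F r : Monic d F -> Monic (S d) (fun l => F l * (l - r)).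
Proof. intros [a Ha]. 
  exists (fun n => (match n with O => 0 | S k => a k end) - r * (if Nat.eqb n d then 1 else a n)).
  intros l. rewrite Ha.
  rewrite (fsum_ext (fun n => ((match n with O => 0 | S k => a k end) - r * (if Nat.eqb n d then 1 else a n)) * l^n)
     (fun n => (match n with O => 0 | S k => a k end) * l^n + (-r) * ((if Nat.eqb n d then 1 else a n) * l^n)))
    by (intros; ring).
  rewrite fsum_plus, fsum_scal, fsum_shift.
  change (fsum (fun n => (if Nat.eqb n d then 1 else a n) * l ^ n) (S d)) with
    (fsum (fun n => (if Nat.eqb n d then 1 else a n) * l ^ n) d + (if Nat.eqb d d then 1 else a d) * l ^ d).
  rewrite Nat.eqb_refl.
  rewrite (fsum_ext (fun n => (if Nat.eqb n d then 1 else a n) * l ^ n) (fun n => a n * l^n)).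
  2: { intros i Hi. destruct (Nat.eqb_spec i d). lia. auto. }
  rewrite (fsum_ext (fun i => match S i with O => 0 | S k => a k end * l ^ S i) (fun i => l * (a i * l^i))) by (intros; simpl; ring).
  rewrite fsum_scal. simpl. ring. Qed.

Lemma monic_prod d F r k : Monic d F -> Monic (d + k) (fun l => F l * (l - r)^k).
Proof. intros H. induction k.
- rewrite Nat.add_0_r. eapply monic_ext. 2: apply H. intros; simpl; ring.
- replace (d + S k)%nat with (S (d + k)) by lia. eapply monic_ext. 2: apply (monic_mul _ _ r IHk).
  intros; simpl; ring. Qed.

Definition Poly K p l := (-1)^(p-1) * ((l - (lam 1 + lam K)/2) * (lam K - l)^(p-1) * (l - lam 1)^(p-1)).

Lemma poly_monic K p : (1 <= p)%nat -> Monic (2*p-1) (Poly K p).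
Proof. intros Hp.
  assert (M1 : Monic 1 (fun l => l - (lam 1 + lam K)/2)).
  { eapply monic_ext. 2: apply (monic_mul 0 (fun _ => 1) ((lam 1 + lam K)/2) monic_0). intros; simpl; ring. }
  pose proof (monic_prod _ _ (lam K) (p-1) M1) as M2.
  pose proof (monic_prod _ _ (lam 1) (p-1) M2) as M3.
  replace (2*p-1)%nat with (1 + (p-1) + (p-1))%nat by lia.
  eapply monic_ext. 2: apply M3. intros l. unfold Poly.
  replace ((lam K - l)^(p-1)) with ((-1)^(p-1) * (l - lam K)^(p-1)).
  replace ((-1)^(p-1) * ((l - (lam 1 + lam K) / 2) * ((-1)^(p-1) * (l - lam K)^(p-1)) * (l - lam 1)^(p-1)))
    with ((((-1)*(-1))^(p-1)) * ((l - (lam 1 + lam K) / 2) * (l - lam K)^(p-1) * (l - lam 1)^(p-1)))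
    by (rewrite Rpow_mult_distr; ring).
  replace ((-1)*(-1)) with 1 by ring. rewrite pow1. ring.
  rewrite <- Rpow_mult_distr. f_equal. ring. Qed.

Lemma is_series_zero : is_series (fun _ : nat => 0) 0.
Proof. apply is_series_from_bound with 0. intros N. rewrite fsum_zero by auto. rewrite Rminus_0_r, Rabs_R0.
  unfold Rdiv. rewrite Rmult_0_l. lra. Qed.

Lemma is_series_fsum (u : nat -> nat -> R) (v : nat -> R) d :
  (forall n, (n < d)%nat -> is_series (u n) (v n)) -> is_series (fun j => fsum (fun n => u n j) d) (fsum v d).
Proof. induction d; intros H; simpl. apply is_series_zero.
  apply is_series_plus'. apply IHd; intros; apply H; lia. apply H; lia. Qed.

Lemma fsum_scal_r f c n : fsum (fun i => f i * c) n = fsum f n * c.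
Proof. rewrite Rmult_comm, <- fsum_scal. apply fsum_ext; intros; ring. Qed.

Definition cpair K f g j := ip (fun x => f x * phi 1 x) (phi j) * ip (fun x => g x * phi K x) (phi j).
Definition Vn K f g n := ip (Derive_n (fun x => f x * phi 1 x) n) (Derive_n (fun x => g x * phi K x) n).

Lemma series_poly K p a f g : (forall l, Poly K p l = fsum (fun n => a n * l^n) (2*p-1) + l^(2*p-1)) ->
  test_fun f -> test_fun g ->
  is_series (fun j => Poly K p (lam (S j)) * cpair K f g (S j)) (fsum (fun n => a n * Vn K f g n) (2*p-1) + Vn K f g (2*p-1)).
Proof. intros Ha Hf Hg.
  eapply is_series_ext'. 2: apply is_series_plus'.
  3: apply (pair_series f g (phi 1) (phi K) (2*p-1) Hf Hg (phi_smooth 1) (phi_smooth K)).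
  2: apply (is_series_fsum (fun n j => a n * (lam (S j) ^ n * cpair K f g (S j)))).
  - intros j. rewrite Ha. rewrite Rmult_plus_distr_r, <- fsum_scal_r. f_equal.
    apply fsum_ext. intros; ring.
  - intros n _. apply is_series_scal'. apply (pair_series f g (phi 1) (phi K) n Hf Hg (phi_smooth 1) (phi_smooth K)).
Qed.

Lemma L2_nonneg mu k : test_fun mu -> 0 <= RInt (fun x => Derive_n mu k x ^ 2) 0 1.
Proof. intros H. apply RInt_ge_0. lra. apply ex_RInt_cont01. intros. 
  apply (continuous_ext (fun x => Derive_n mu k x * Derive_n mu k x)). intros; simpl; ring.
  apply cR_mult; apply tf_cont; auto. intros; nra. Qed.

Lemma Hnorm2_nonneg mu m : test_fun mu -> 0 <= Hnorm2 m mu.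
Proof. intros H. unfold Hnorm2. induction m; cbn [sum_f_R0]. apply L2_nonneg; auto. pose proof (L2_nonneg mu (S m) H). lra. Qed.

Lemma L2_le_H mu m k : test_fun mu -> (k <= m)%nat -> RInt (fun x => Derive_n mu k x ^ 2) 0 1 <= Hnorm2 m mu.
Proof. intros H. induction m; intros Hk.
- replace k with O by lia. unfold Hnorm2. cbn [sum_f_R0]. lra.
- unfold Hnorm2 in *. cbn [sum_f_R0]. destruct (Nat.eq_dec k (S m)) as [->|Hne].
  + pose proof (Hnorm2_nonneg mu m H). unfold Hnorm2 in H0. lra.
  + pose proof (IHm ltac:(lia)). pose proof (L2_nonneg mu (S m) H). lra. Qed.

Lemma RInt_abs_le (f g : R -> R) : ex_RInt f 0 1 -> ex_RInt g 0 1 -> (forall x, 0 < x < 1 -> Rabs (f x) <= g x) ->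
  Rabs (RInt f 0 1) <= RInt g 0 1.
Proof. intros Hf Hg H. apply Rabs_le. split.
  - assert (RInt (fun x => (-1) * g x) 0 1 <= RInt f 0 1).
    { apply RInt_le. lra. apply (ex_RInt_scal g 0 1 (-1)). auto. auto. intros x Hx. specialize (H x Hx). apply Rabs_le_between in H. lra. }
    rewrite RInt_scal' in H0; auto. lra.
  - apply RInt_le. lra. auto. auto. intros x Hx. specialize (H x Hx). apply Rabs_le_between in H. lra. Qed.

Lemma amgm u v : Rabs u * Rabs v <= (u^2 + v^2)/2.
Proof. rewrite <- Rabs_mult. destruct (Rle_dec 0 (u*v)).
  rewrite Rabs_right by lra. pose proof (pow2_ge_0 (u - v)). nra. rewrite Rabs_left by lra. pose proof (pow2_ge_0 (u + v)). nra. Qed.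

Lemma EL (U : R -> R) i l m : (forall x, continuous U x) -> (i <= m)%nat -> (l <= m)%nat ->
  exists C, 0 <= C /\ forall mu, test_fun mu ->
    Rabs (RInt (fun x => U x * Derive_n mu i x * Derive_n mu l x) 0 1) <= C * Hnorm2 m mu.
Proof. intros HU Hi Hl. destruct (bound01 U HU) as [Ub [Ub0 HUb]]. exists Ub. split; auto.
  intros mu Hmu.
  assert (Ci := tf_cont mu Hmu i). assert (Cl := tf_cont mu Hmu l).
  assert (Sq : forall k, ex_RInt (fun x => Derive_n mu k x ^ 2) 0 1).
  { intros k. apply ex_RInt_cont01. intros. apply (continuous_ext (fun x => Derive_n mu k x * Derive_n mu k x)). intros; simpl; ring.
    apply cR_mult; apply tf_cont; auto. }
  eapply Rle_trans. apply RInt_abs_le with (g := fun x => (Ub / 2) * (Derive_n mu i x ^ 2 + Derive_n mu l x ^ 2)).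
  - apply ex_RInt_cont01. intros. apply cR_mult; auto. apply cR_mult; auto.
  - apply (ex_RInt_scal (fun x => Derive_n mu i x ^ 2 + Derive_n mu l x ^ 2)). apply (ex_RInt_plus (fun x => Derive_n mu i x ^ 2) (fun x => Derive_n mu l x ^ 2)); auto.
  - intros x Hx. rewrite !Rabs_mult. assert (HU' : Rabs (U x) <= Ub) by (apply HUb; lra).
    set (u := Derive_n mu i x). set (v := Derive_n mu l x).
    pose proof (amgm u v).
    pose proof (Rabs_pos u). pose proof (Rabs_pos v). pose proof (Rabs_pos (U x)).
    assert (0 <= Rabs u * Rabs v) by (apply Rmult_le_pos; auto).
    replace (Ub / 2 * (u ^ 2 + v ^ 2)) with (Ub * ((u^2+v^2)/2)) by field.
    rewrite Rmult_assoc. apply Rmult_le_compat; auto. 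
  - rewrite RInt_scal'. rewrite RInt_plus'; auto.
    pose proof (L2_le_H mu m i Hmu Hi). pose proof (L2_le_H mu m l Hmu Hl).
    replace (Ub * Hnorm2 m mu) with ((Ub / 2) * (Hnorm2 m mu + Hnorm2 m mu)) by field.
    apply Rmult_le_compat_l. lra. lra.
    apply (ex_RInt_plus (fun x => Derive_n mu i x ^ 2) (fun x => Derive_n mu l x ^ 2)); auto. Qed.

Lemma sum_const (P : (R -> R) -> Prop) (Hn : (R -> R) -> R) (x : nat -> (R -> R) -> R) n :
  (forall i, (i < n)%nat -> exists C, 0 <= C /\ forall mu, P mu -> Rabs (x i mu) <= C * Hn mu) ->
  exists C, 0 <= C /\ forall mu, P mu -> Rabs (fsum (fun i => x i mu) n) <= C * Hn mu.
Proof. induction n; intros H.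
- exists 0. split. lra. intros mu _. simpl. rewrite Rabs_R0. 
  rewrite Rmult_0_l. lra.
- destruct IHn as [C1 [HC1 H1]]. intros; apply H; lia.
  destruct (H n ltac:(lia)) as [C2 [HC2 H2]].
  exists (C1 + C2). split. lra. intros mu Hmu. simpl.
  eapply Rle_trans. apply Rabs_triang. specialize (H1 mu Hmu). specialize (H2 mu Hmu). lra. Qed.

Lemma BLsum (W V : nat -> R -> R) nW nV m :
  (forall i x, continuous (W i) x) -> (forall i x, continuous (V i) x) -> (nW <= S m)%nat -> (nV <= S m)%nat ->
  exists C, 0 <= C /\ forall mu, test_fun mu ->
    Rabs (RInt (fun x => fsum (fun i => W i x * Derive_n mu i x) nW * fsum (fun l => V l x * Derive_n mu l x) nV) 0 1) <= C * Hnorm2 m mu.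
Proof. intros CW CV HnW HnV.
  assert (E : forall mu, test_fun mu -> RInt (fun x => fsum (fun i => W i x * Derive_n mu i x) nW * fsum (fun l => V l x * Derive_n mu l x) nV) 0 1
     = fsum (fun i => fsum (fun l => RInt (fun x => (W i x * V l x) * Derive_n mu i x * Derive_n mu l x) 0 1) nV) nW).
  { intros mu Hmu. rewrite (RInt_ext' _ (fun x => fsum (fun i => fsum (fun l => (W i x * V l x) * Derive_n mu i x * Derive_n mu l x) nV) nW)).
    2: { intros x _. rewrite <- fsum_scal_r. apply fsum_ext. intros i _. rewrite <- fsum_scal. apply fsum_ext. intros; ring. }
    rewrite RInt_fsum. apply fsum_ext. intros i _. rewrite RInt_fsum. auto.
    intros; apply ex_RInt_cont01; intros. apply cR_mult. apply cR_mult. apply cR_mult; auto. apply tf_cont; auto. apply tf_cont; auto.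
    intros; apply ex_RInt_cont01; intros. apply cR_fsum. intros. apply cR_mult. apply cR_mult. apply cR_mult; auto. apply tf_cont; auto. apply tf_cont; auto. }
  destruct (sum_const test_fun (Hnorm2 m) (fun i mu => fsum (fun l => RInt (fun x => (W i x * V l x) * Derive_n mu i x * Derive_n mu l x) 0 1) nV) nW) as [C [HC HCb]].
  - intros i Hi. apply (sum_const test_fun (Hnorm2 m) (fun l mu => RInt (fun x => (W i x * V l x) * Derive_n mu i x * Derive_n mu l x) 0 1) nV).
    intros l Hl. apply EL. intros; apply cR_mult; auto. lia. lia.
  - exists C. split; auto. intros mu Hmu. rewrite E; auto. Qed.

Lemma EL2 (U : R -> R) l m : Smooth U -> (l < S m)%nat ->
  exists C, 0 <= C /\ forall mu, test_fun mu ->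
    Rabs (RInt (fun x => U x * Derive_n mu (S m) x * Derive_n mu l x) 0 1) <= C * Hnorm2 m mu.
Proof. intros HU Hl.
  assert (CU := Smooth_cont U HU). assert (CU' := Smooth_cont _ (Smooth_Derive U HU)).
  assert (IBP : forall mu, test_fun mu ->
    RInt (fun x => U x * Derive_n mu (S m) x * Derive_n mu l x) 0 1 =
    - (RInt (fun x => Derive U x * Derive_n mu m x * Derive_n mu l x) 0 1 + RInt (fun x => U x * Derive_n mu m x * Derive_n mu (S l) x) 0 1)).
  { intros mu Hmu. destruct (tf_supp mu Hmu) as [a [b [Ha [Hab [Hb Hz]]]]].
    pose proof (ibp_step (Derive_n mu m) (Derive_n mu (S m)) (fun x => U x * Derive_n mu l x)
      (fun x => Derive U x * Derive_n mu l x + U x * Derive_n mu (S l) x)) as HI.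
    unfold ip in HI. rewrite (RInt_ext' (fun x => U x * Derive_n mu (S m) x * Derive_n mu l x) (fun x => Derive_n mu (S m) x * (U x * Derive_n mu l x))) by (intros; ring).
    rewrite HI. rewrite <- RInt_plus'. f_equal. apply RInt_ext'. intros; ring.
    apply ex_RInt_cont01; intros; repeat apply cR_mult; auto; apply tf_cont; auto.
    apply ex_RInt_cont01; intros; repeat apply cR_mult; auto; apply tf_cont; auto.
    apply tf_deriv; auto.
    intros x. apply is_derive_mult' with (a := Derive U x) (b := Derive_n mu (S l) x). apply Smooth_is_derive; auto. apply tf_deriv; auto. auto.
    apply tf_cont; auto.
    intros x. apply cR_plus; apply cR_mult; auto; apply tf_cont; auto.
    rewrite (Hz m 0) by lra. ring. rewrite (Hz m 1) by lra. ring. }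
  destruct (Nat.eq_dec l m) as [->|Hne].
  - destruct (EL (Derive U) m m m CU' (le_n _) (le_n _)) as [C [HC HCb]].
    exists (C/2). split. lra. intros mu Hmu. specialize (IBP mu Hmu).
    rewrite (RInt_ext' (fun x => U x * Derive_n mu m x * Derive_n mu (S m) x) (fun x => U x * Derive_n mu (S m) x * Derive_n mu m x)) in IBP by (intros; ring).
    assert (E : RInt (fun x => U x * Derive_n mu (S m) x * Derive_n mu m x) 0 1 = - (RInt (fun x => Derive U x * Derive_n mu m x * Derive_n mu m x) 0 1) / 2) by lra.
    rewrite E. unfold Rdiv. rewrite Rabs_mult, Rabs_Ropp. rewrite (Rabs_right (/2)) by lra.
    specialize (HCb mu Hmu). lra.
  - destruct (EL (Derive U) m l m CU' (le_n _) ltac:(lia)) as [C1 [HC1 H1]].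
    destruct (EL U m (S l) m CU (le_n _) ltac:(lia)) as [C2 [HC2 H2]].
    exists (C1 + C2). split. lra. intros mu Hmu. rewrite IBP by auto. rewrite Rabs_Ropp.
    eapply Rle_trans. apply Rabs_triang. specialize (H1 mu Hmu). specialize (H2 mu Hmu). lra. Qed.

Lemma fsum_Sn f n : fsum f (S n) = fsum f n + f n.
Proof. reflexivity. Qed.

Lemma low_bound K n m : (n <= m)%nat -> exists C, 0 <= C /\ forall mu, test_fun mu -> Rabs (Vn K mu mu n) <= C * Hnorm2 m mu.
Proof. intros Hnm.
  destruct (expand (phi 1) (phi_smooth 1) n) as [W [HWs [_ [_ HWe]]]].
  destruct (expand (phi K) (phi_smooth K) n) as [V [HVs [_ [_ HVe]]]].
  destruct (BLsum W V (S n) (S n) m) as [C [HC HCb]].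
  intros; apply Smooth_cont; auto. intros; apply Smooth_cont; auto. lia. lia.
  exists C. split; auto. intros mu Hmu. unfold Vn, ip.
  rewrite (RInt_ext' _ (fun x => fsum (fun i => W i x * Derive_n mu i x) (S n) * fsum (fun l => V l x * Derive_n mu l x) (S n))).
  apply HCb; auto. intros. rewrite HWe, HVe; auto. Qed.

Lemma top_bound K m : exists C, 0 <= C /\ forall mu, test_fun mu ->
  Rabs (Vn K mu mu (S m) - ip (fun x => Derive_n mu (S m) x ^ 2 * phi 1 x) (phi K)) <= C * Hnorm2 m mu.
Proof.
  destruct (expand (phi 1) (phi_smooth 1) (S m)) as [W [HWs [HWn [_ HWe]]]].
  destruct (expand (phi K) (phi_smooth K) (S m)) as [V [HVs [HVn [_ HVe]]]].
  assert (CW : forall i x, continuous (W i) x) by (intros; apply Smooth_cont; auto).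
  assert (CV : forall i x, continuous (V i) x) by (intros; apply Smooth_cont; auto).
  destruct (BLsum W V (S m) (S m) m CW CV (le_n _) (le_n _)) as [C1 [HC1 H1]].
  destruct (sum_const test_fun (Hnorm2 m) (fun l mu => RInt (fun x => (phi 1 x * V l x + phi K x * W l x) * Derive_n mu (S m) x * Derive_n mu l x) 0 1) (S m)) as [C2 [HC2 H2]].
  { intros l Hl. apply EL2; auto. apply Smooth_plus; apply Smooth_mult; auto; apply phi_smooth. }
  exists (C1 + C2). split. lra. intros mu Hmu.
  set (D := fun i x => Derive_n mu i x).
  assert (CD : forall i x, continuous (D i) x) by (intros; apply tf_cont; auto).
  set (R1 := fun x => fsum (fun i => W i x * D i x) (S m)).
  set (R2 := fun x => fsum (fun i => V i x * D i x) (S m)).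
  assert (CR1 : forall x, continuous R1 x) by (intros; apply cR_fsum; intros; apply cR_mult; auto).
  assert (CR2 : forall x, continuous R2 x) by (intros; apply cR_fsum; intros; apply cR_mult; auto).
  assert (E : Vn K mu mu (S m) - ip (fun x => Derive_n mu (S m) x ^ 2 * phi 1 x) (phi K) =
    RInt (fun x => R1 x * R2 x) 0 1 + RInt (fun x => fsum (fun l => (phi 1 x * V l x + phi K x * W l x) * D (S m) x * D l x) (S m)) 0 1).
  { unfold Vn, ip. rewrite <- RInt_minus'. rewrite <- RInt_plus'. apply RInt_ext'. intros x _.
    rewrite HWe, HVe by auto. rewrite (fsum_Sn _ (S m)), (fsum_Sn _ (S m)). rewrite HWn, HVn.
    rewrite (fsum_ext (fun l => (phi 1 x * V l x + phi K x * W l x) * D (S m) x * D l x)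
       (fun l => (phi 1 x * D (S m) x) * (V l x * D l x) + (phi K x * D (S m) x) * (W l x * D l x))) by (intros; ring).
    rewrite fsum_plus, !fsum_scal. unfold R1, R2, D. ring.
    apply ex_RInt_cont01; intros; apply cR_mult; auto.
    apply ex_RInt_cont01; intros; apply cR_fsum; intros; repeat apply cR_mult; auto; try apply cR_plus; try apply cR_mult; auto; apply phi_cont.
    apply ex_RInt_cont01; intros; apply cR_mult; apply prod_cont; auto; apply phi_smooth.
    apply ex_RInt_cont01; intros; apply cR_mult. 2: apply phi_cont.
    apply (continuous_ext (fun x => Derive_n mu (S m) x * Derive_n mu (S m) x * phi 1 x)). intros; simpl; ring.
    apply cR_mult. apply cR_mult. apply tf_cont; auto. apply tf_cont; auto. apply phi_cont. }
  unfold D in *. rewrite E. eapply Rle_trans. apply Rabs_triang.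
  specialize (H1 mu Hmu). specialize (H2 mu Hmu).
  rewrite RInt_fsum.
  2: intros; apply ex_RInt_cont01; intros; repeat apply cR_mult; auto; try apply cR_plus; try apply cR_mult; auto; apply phi_cont.
  unfold R1, R2, D in *. lra. Qed.

Lemma Dn_lin f g a n x : test_fun f -> test_fun g ->
  Derive_n (fun y => a * f y + g y) n x = a * Derive_n f n x + Derive_n g n x.
Proof. intros [Hf _] [Hg _]. rewrite Derive_n_plus. rewrite Derive_n_scal_l. auto.
  apply filter_forall. intros y k _. apply ex_derive_n_scal_l. apply Hf.
  apply filter_forall. intros y k _. apply Hg. Qed.

Lemma tf_cont0 f : test_fun f -> forall x, continuous f x.
Proof. intros H x. exact (tf_cont f H 0 x). Qed.

Lemma ip_lin1 (u v w : R -> R) a : (forall x, continuous u x) -> (forall x, continuous v x) -> (forall x, continuous w x) ->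
  ip (fun x => a * u x + v x) w = a * ip u w + ip v w.
Proof. intros Cu Cv Cw. unfold ip.
  rewrite (RInt_ext' _ (fun x => a * (u x * w x) + v x * w x)) by (intros; ring).
  rewrite RInt_plus', RInt_scal'. auto.
  all: apply ex_RInt_cont01; intros; try apply cR_scal; apply cR_mult; auto. Qed.

Lemma cpair_lin1 K f g h a j : test_fun f -> test_fun g ->
  cpair K (fun x => a * f x + g x) h j = a * cpair K f h j + cpair K g h j.
Proof. intros Hf Hg. unfold cpair.
  replace (ip (fun x => (a * f x + g x) * phi 1 x) (phi j)) with (ip (fun x => a * (f x * phi 1 x) + g x * phi 1 x) (phi j))
    by (unfold ip; apply RInt_ext'; intros; ring).
  rewrite (ip_lin1 (fun x => f x * phi 1 x) (fun x => g x * phi 1 x)). ring.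
  1,2: intros; apply cR_mult; [apply tf_cont0; auto| apply phi_cont].
  apply phi_cont. Qed.

Lemma cpair_lin2 K f g h a j : test_fun f -> test_fun g ->
  cpair K h (fun x => a * f x + g x) j = a * cpair K h f j + cpair K h g j.
Proof. intros Hf Hg. unfold cpair.
  replace (ip (fun x => (a * f x + g x) * phi K x) (phi j)) with (ip (fun x => a * (f x * phi K x) + g x * phi K x) (phi j))
    by (unfold ip; apply RInt_ext'; intros; ring).
  rewrite (ip_lin1 (fun x => f x * phi K x) (fun x => g x * phi K x)). ring.
  1,2: intros; apply cR_mult; [apply tf_cont0; auto| apply phi_cont].
  apply phi_cont. Qed.

Ltac ccont := repeat first [ apply phi_cont | (apply tf_cont; assumption) | apply cR_scal | apply cR_mult ].

Theorem propositionA3 (K : nat) (HK : (1 <= K)%nat) :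
  forall p : nat, (1 <= p)%nat ->
  exists (C : R) (Q : (R -> R) -> R),
    0 < C /\ quadratic_form_on test_fun Q /\
    forall mu : R -> R, test_fun mu ->
      ex_series (A_series K p mu) /\
      A_Kp K p mu =
        ip (fun x => (Derive_n mu (2 * p - 1) x) ^ 2 * phi 1 x) (phi K) + Q mu /\
      Rabs (Q mu) <= C * Hnorm2 (2 * p - 2) mu.
Proof. intros p Hp.
  destruct (poly_monic K p Hp) as [a Ha].
  assert (Hd : (2*p-1)%nat = S (2*p-2)) by lia.
  destruct (sum_const test_fun (Hnorm2 (2*p-2)) (fun n mu => a n * Vn K mu mu n) (2*p-1)) as [C1 [HC1 H1]].
  { intros n Hn. destruct (low_bound K n (2*p-2) ltac:(lia)) as [C [HC HCb]].
    exists (Rabs (a n) * C). split. apply Rmult_le_pos; auto; apply Rabs_pos.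
    intros mu Hmu. rewrite Rabs_mult. rewrite Rmult_assoc. apply Rmult_le_compat_l. apply Rabs_pos. auto. }
  destruct (top_bound K (2*p-2)) as [C2 [HC2 H2]].
  set (lead := fun mu => ip (fun x => Derive_n mu (2 * p - 1) x ^ 2 * phi 1 x) (phi K)).
  exists (C1 + C2 + 1), (fun mu => A_Kp K p mu - lead mu).
  assert (Hser : forall f g, test_fun f -> test_fun g ->
     is_series (fun j => Poly K p (lam (S j)) * cpair K f g (S j)) (fsum (fun n => a n * Vn K f g n) (2*p-1) + Vn K f g (2*p-1))).
  { intros f g Hf Hg. apply series_poly; auto. }
  assert (HAs : forall mu j, A_series K p mu j = Poly K p (lam (S j)) * cpair K mu mu (S j)).
  { intros. unfold A_series, A_term, Poly, cpair, c_coef. ring. }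
  assert (HAK : forall mu, test_fun mu -> A_Kp K p mu = fsum (fun n => a n * Vn K mu mu n) (2*p-1) + Vn K mu mu (2*p-1)).
  { intros mu Hmu. unfold A_Kp. rewrite (Series_ext _ (fun j => Poly K p (lam (S j)) * cpair K mu mu (S j))) by apply HAs.
    apply is_series_unique. apply Hser; auto. }
  split; [lra|]. split.
  - exists (fun f g => Series (fun j => Poly K p (lam (S j)) * cpair K f g (S j)) -
       ip (fun x => Derive_n f (2*p-1) x * Derive_n g (2*p-1) x * phi 1 x) (phi K)).
    split.
    + intros c f g h Hf Hg Hh. split.
      * rewrite (Series_ext (fun j => Poly K p (lam (S j)) * cpair K (fun x => c * f x + g x) h (S j)) (fun j => c * (Poly K p (lam (S j)) * cpair K f h (S j)) + Poly K p (lam (S j)) * cpair K g h (S j))).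
        2: { intros j. rewrite cpair_lin1; auto. ring. }
        rewrite Series_plus, Series_scal_l.
        2: { eexists. apply is_series_scal'. apply Hser; auto. }
        2: { eexists. apply Hser; auto. }
        unfold ip. rewrite (RInt_ext' (fun x => Derive_n (fun x => c * f x + g x) (2*p-1) x * Derive_n h (2*p-1) x * phi 1 x * phi K x) (fun x => c * (Derive_n f (2*p-1) x * Derive_n h (2*p-1) x * phi 1 x * phi K x) + Derive_n g (2*p-1) x * Derive_n h (2*p-1) x * phi 1 x * phi K x)).
        2: { intros. rewrite Dn_lin; auto. ring. }
        rewrite RInt_plus', RInt_scal'. ring.
        1-3: apply ex_RInt_cont01; intros; ccont.
      * rewrite (Series_ext (fun j => Poly K p (lam (S j)) * cpair K h (fun x => c * f x + g x) (S j)) (fun j => c * (Poly K p (lam (S j)) * cpair K h f (S j)) + Poly K p (lam (S j)) * cpair K h g (S j))).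
        2: { intros j. rewrite cpair_lin2; auto. ring. }
        rewrite Series_plus, Series_scal_l.
        2: { eexists. apply is_series_scal'. apply Hser; auto. }
        2: { eexists. apply Hser; auto. }
        unfold ip. rewrite (RInt_ext' (fun x => Derive_n h (2*p-1) x * Derive_n (fun x => c * f x + g x) (2*p-1) x * phi 1 x * phi K x) (fun x => c * (Derive_n h (2*p-1) x * Derive_n f (2*p-1) x * phi 1 x * phi K x) + Derive_n h (2*p-1) x * Derive_n g (2*p-1) x * phi 1 x * phi K x)).
        2: { intros. rewrite Dn_lin; auto. ring. }
        rewrite RInt_plus', RInt_scal'. ring.
        1-3: apply ex_RInt_cont01; intros; ccont.
    + intros f Hf. unfold A_Kp. rewrite (Series_ext _ (fun j => Poly K p (lam (S j)) * cpair K f f (S j))) by apply HAs.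
      f_equal. unfold lead, ip. apply RInt_ext'. intros; simpl; ring.
  - intros mu Hmu. split; [|split].
    { exists (fsum (fun n => a n * Vn K mu mu n) (2*p-1) + Vn K mu mu (2*p-1)).
      eapply is_series_ext'. 2: apply (Hser mu mu Hmu Hmu). intros; rewrite HAs; auto. }
    { cbv beta. unfold lead. lra. }
    { rewrite HAK by auto.
      specialize (H1 mu Hmu). specialize (H2 mu Hmu). pose proof (Hnorm2_nonneg mu (2*p-2) Hmu).
      unfold lead. rewrite Hd in *.
      replace (fsum (fun n => a n * Vn K mu mu n) (S (2 * p - 2)) + Vn K mu mu (S (2 * p - 2)) -
        ip (fun x => Derive_n mu (S (2 * p - 2)) x ^ 2 * phi 1 x) (phi K)) with
        (fsum (fun n => a n * Vn K mu mu n) (S (2 * p - 2)) + (Vn K mu mu (S (2 * p - 2)) -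
        ip (fun x => Derive_n mu (S (2 * p - 2)) x ^ 2 * phi 1 x) (phi K))) by ring.
      eapply Rle_trans. apply Rabs_triang.
      assert (C1 * Hnorm2 (2 * p - 2) mu + C2 * Hnorm2 (2 * p - 2) mu <= (C1 + C2 + 1) * Hnorm2 (2 * p - 2) mu).
      { rewrite <- Rmult_plus_distr_r. apply Rmult_le_compat_r; auto. lra. }
      lra. }
Qed.
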